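(* For any programs $\Pi_1$ and $\Pi_2$ of mini-gringo with counting, if the sentence $\tau^*\Pi_1\leftrightarrow\tau^*\Pi_2$ is provable in the deductive system $\mathit{HT}_{\#}$, then $\Pi_1$ and $\Pi_2$ are strongly equivalent.
   Context: Precomputed terms. Fix a totally ordered set of precomputed terms containing all numerals $\overline n$ (one for each integer $n$, in 1-1 correspondence with the integers), all symbolic constants, and possibly other symbols, such that numerals are contiguous (every precomputed term between two numerals is a numeral) and are ordered as the integers. Programs (mini-gringo with counting). Program terms are built from precomputed terms and variables using unary $|\cdot|$ and binary $+,-,\times,/,\backslash,..$ (interval). An atom is a symbolic constant $p$ optionally followed by a parenthesized tuple of terms; a literal is an atom possibly preceded by one or two occurrences of $\mathit{not}$; a comparison is $t_1\prec t_2$ with $\prec$ one of $=,\neq,<,>,\le,\ge$. An aggregate element is $\mathbf X:\mathbf L$ where $\mathbf X$ is a tuple of distinct variables and $\mathbf L$ is a conjunction of literals and comparisons in which every member of $\mathbf X$ occurs. An aggregate atom is $\mathit{count}\{E\}\ge t$ or $\mathit{count}\{E\}\le t$ with $E$ an aggregate element and $t$ a term not containing $..$. A rule is $\mathit{Head}\leftarrow\mathit{Body}$ where $\mathit{Body}$ is a (possibly empty) conjunction of literals, comparisons and aggregate atoms, and $\mathit{Head}$ is an atom (basic rule), an atom in braces (choice rule), or empty (constraint). A variable of a rule is local if each of its occurrences is inside an aggregate element, global otherwise; a rule is pure if for every aggregate element $\mathbf X:\mathbf L$ in its body all members of $\mathbf X$ are local. A program is a finite set of pure rules. Semantics. A precomputed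 atom is $p(\mathbf t)$ with all members of $\mathbf t$ precomputed terms. The semantics of mini-gringo with counting (Lifschitz 2022) uses a translation $\tau$ mapping each pure rule $R$ to an infinitary propositional formula $\tau R$ built from precomputed atoms (e.g. $q\leftarrow\mathit{count}\{X:p(X)\}\le 5$ becomes $(\bigwedge_{\Delta:|\Delta|>5}\neg\bigwedge_{x\in\Delta}p(x))\to q$, $\Delta$ ranging over finite sets of precomputed terms); $\tau\Pi$ is the conjunction of $\tau R$ over rules $R$ of $\Pi$. Stable models of $\Pi$ are the stable models of $\tau\Pi$ in the sense of Truszczyński (2012). Programs $\Pi_1,\Pi_2$ are strongly equivalent if for every set $\Phi$ of infinitary propositional formulas built from precomputed atoms, $\{\tau\Pi_1\}\cup\Phi$ and $\{\tau\Pi_2\}\cup\Phi$ have the same stable models. Signatures. Formulas are two-sorted, with sort general and its subsort integer; integer variables are written $I,J,K,M,N$ (possibly with indices); program variables are general variables. Signature $\sigma_0$: numerals as integer object constants; other precomputed terms as general object constants; $|\cdot|$ (unary) and $+,-,\times$ (binary) as function constants on the integer sort; for each symbolic constant $p$ and $n\ge0$ an $n$-ary predicate constant $p/n$ with general arguments ($(p/n)(\mathbf t)$ is written $p(\mathbf t)$); binary predicate constants $\neq,<,>,\le,\ge$ with general arguments ($=$ is logical equality). Signature $\sigma_1$ adds, for every pair of disjoint lists $\mathbf X,\mathbf V$ of distinct general variables and every formula $F$ over $\sigma_0$ whose free variables are among $\mathbf X,\mathbf V$, predicate constants $\mathit{Atleast}^{\mathbf X;\mathbf V}_F$ and $\mathit{Atmost}^{\mathbf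 X;\mathbf V}_F$ with $|\mathbf V|+1$ general arguments. Signature $\sigma_2$ adds, for the same $\mathbf X,\mathbf V,F$, predicate constants $\mathit{Start}^{\mathbf X;\mathbf V}_F$ with $|\mathbf X|+|\mathbf V|+1$ arguments, the last of sort integer and the others general. Translation $\tau^*$. For a program term $t$ and a general variable $Z$ not in $t$, the formula $\mathit{val}_t(Z)$ over $\sigma_0$ is defined recursively ($I,J,K$ fresh integer variables): if $t$ is a precomputed term or variable, $Z=t$; if $t=|t_1|$, $\exists I(\mathit{val}_{t_1}(I)\wedge Z=|I|)$; if $t=t_1\,op\,t_2$ with $op\in\{+,-,\times\}$, $\exists IJ(\mathit{val}_{t_1}(I)\wedge\mathit{val}_{t_2}(J)\wedge Z=I\,op\,J)$; if $t=t_1/t_2$, $\exists IJK(\mathit{val}_{t_1}(I)\wedge\mathit{val}_{t_2}(J)\wedge K\times|J|\le|I|<(K+\overline1)\times|J|\wedge((I\times J\ge\overline0\wedge Z=K)\vee(I\times J<\overline0\wedge Z=-K)))$; if $t=t_1\backslash t_2$, the same with $Z=I-K\times J$ and $Z=I+K\times J$ in place of $Z=K$ and $Z=-K$; if $t=t_1..t_2$, $\exists IJK(\mathit{val}_{t_1}(I)\wedge\mathit{val}_{t_2}(J)\wedge I\le K\le J\wedge Z=K)$. For tuples, $\mathit{val}_{\mathbf t}(\mathbf Z)$ is the conjunction of the componentwise formulas. With fresh general variables: $\tau^B(p(\mathbf t))=\exists\mathbf Z(\mathit{val}_{\mathbf t}(\mathbf Z)\wedge p(\mathbf Z))$; $\tau^B(\mathit{not}\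 p(\mathbf t))=\exists\mathbf Z(\mathit{val}_{\mathbf t}(\mathbf Z)\wedge\neg p(\mathbf Z))$; $\tau^B(\mathit{not}\ \mathit{not}\ p(\mathbf t))=\exists\mathbf Z(\mathit{val}_{\mathbf t}(\mathbf Z)\wedge\neg\neg p(\mathbf Z))$; $\tau^B(t_1\prec t_2)=\exists Z_1Z_2(\mathit{val}_{t_1}(Z_1)\wedge\mathit{val}_{t_2}(Z_2)\wedge Z_1\prec Z_2)$; $\tau^B$ of a conjunction is the conjunction of the $\tau^B$ of its members. For a body element $B$: $B^*=\tau^B(B)$ if $B$ is a literal or comparison; if $B$ is $\mathit{count}\{\mathbf X:\mathbf L\}\ge t$ then $B^*=\exists C(\mathit{val}_t(C)\wedge\mathit{Atleast}^{\mathbf X;\mathbf V}_{\exists\mathbf W\tau^B(\mathbf L)}(\mathbf V,C))$, and for $\le$ the same with $\mathit{Atmost}$, where $C$ is a fresh general variable, $\mathbf V$ is the list of global variables occurring in $\mathbf L$, and $\mathbf W$ the list of local variables occurring in $\mathbf L$ not in $\mathbf X$. For a rule $H\leftarrow B_1\wedge\dots\wedge B_n$, $\tau^*$ of the rule is the universal closure of $B_1^*\wedge\dots\wedge B_n^*\wedge\mathit{val}_{\mathbf t}(\mathbf Z)\to p(\mathbf Z)$ if $H$ is $p(\mathbf t)$; of $B_1^*\wedge\dots\wedge B_n^*\wedge\mathit{val}_{\mathbf t}(\mathbf Z)\to p(\mathbf Z)\vee\neg p(\mathbf Z)$ if $H$ is $\{p(\mathbf t)\}$; of $\neg(B_1^*\wedge\dots\wedge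 B_n^* )$ if $H$ is empty ($\mathbf Z$ fresh general variables). $\tau^*\Pi$ is the conjunction of $\tau^*R$ for $R\in\Pi$. System $\mathit{HT}_{\#}$. $F^X_t$ denotes substitution of $t$ for the free occurrences of $X$ in $F$. For equal-length tuples of general variables, $(X_1,\dots,X_m)<(U_1,\dots,U_m)$ abbreviates $\bigvee_{l=1}^m(X_l<U_l\wedge\bigwedge_{k=1}^{l-1}X_k=U_k)$. An interpretation of $\sigma_0$ is standard if its general domain is the set of precomputed terms, its integer domain the set of numerals, every object constant denotes itself, $|\cdot|,+,-,\times$ have their arithmetic meaning, and $\neq,<,>,\le,\ge$ are interpreted by the total order on precomputed terms. $\mathit{Std}$ is the set of sentences over $\sigma_0$ containing no predicate symbol $p/n$ that are satisfied by standard interpretations. $D_0$ consists of, for all $\mathbf X,\mathbf V,F$ as in the definition of $\sigma_2$ and $\mathbf U$ a list of distinct general variables of the length of $\mathbf X$ disjoint from $\mathbf X$ and $\mathbf V$: $\forall\mathbf X\mathbf VN(N\le\overline0\to\mathit{Start}^{\mathbf X;\mathbf V}_F(\mathbf X,\mathbf V,N))$; $\forall\mathbf X\mathbf V(\mathit{Start}^{\mathbf X;\mathbf V}_F(\mathbf X,\mathbf V,\overline1)\leftrightarrow F)$; $\forall\mathbf X\mathbf VN(N>\overline0\to(\mathit{Start}^{\mathbf X;\mathbf V}_F(\mathbf X,\mathbf V,N+\overline1)\leftrightarrow F\wedge\exists\mathbf U(\mathbf X<\mathbf U\wedge\mathit{Start}^{\mathbf X;\mathbf V}_F(\mathbf U,\mathbf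 V,N))))$. $D_1$ consists of $\forall\mathbf VY(\mathit{Atleast}^{\mathbf X;\mathbf V}_F(\mathbf V,Y)\leftrightarrow\exists\mathbf XN(\mathit{Start}^{\mathbf X;\mathbf V}_F(\mathbf X,\mathbf V,N)\wedge N\ge Y))$ and $\forall\mathbf VY(\mathit{Atmost}^{\mathbf X;\mathbf V}_F(\mathbf V,Y)\leftrightarrow\forall\mathbf XN(\mathit{Start}^{\mathbf X;\mathbf V}_F(\mathbf X,\mathbf V,N)\to N\le Y))$ ($Y$ a general variable). $\mathit{Ind}$ is the set of universal closures of $F^N_{\overline0}\wedge\forall N(N\ge\overline0\wedge F\to F^N_{N+\overline1})\to\forall N(N\ge\overline0\to F)$ for formulas $F$ over $\sigma_2$. $\mathit{HT}_{\#}$ is first-order intuitionistic logic with equality for the two-sorted signature $\sigma_2$, extended by all formulas $F\vee(F\to G)\vee\neg G$ and $\exists X(F\to\forall X\,F)$ ($F,G$ over $\sigma_2$, $X$ a variable of either sort), and by the axioms $\mathit{Std}$, $\mathit{Ind}$, $D_0$, $D_1$. *)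

(* Defs.v *)
From Stdlib Require Import ZArith List Arith Bool ClassicalEpsilon.
Import ListNotations.

(** * Precomputed terms *)

(** A totally ordered set of precomputed terms, containing the numerals
    (injective image of Z), the symbolic constants (injective image of nat),
    and possibly other symbols; numerals are contiguous and ordered as Z. *)
Record PT : Type := {
  pt : Type;
  num : Z -> pt;
  symc : nat -> pt;
  ptlt : pt -> pt -> Prop;
  num_inj : forall n m, num n = num m -> n = m;
  symc_inj : forall a b, symc a = symc b -> a = b;
  num_symc : forall n a, num n <> symc a;
  ptlt_irrefl : forall x, ~ ptlt x x;
  ptlt_trans : forall x y z, ptlt x y -> ptlt y z -> ptlt x z;
  ptlt_total : forall x y, ptlt x y \/ x = y \/ ptlt y x;
  num_lt : forall n m, ptlt (num n) (num m) <-> (n < m)%Z;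
  num_contig : forall n m x, ptlt (num n) x -> ptlt x (num m) -> exists k, x = num k
}.

(** * Syntax of programs (mini-gringo with counting) *)

(** Program variables are named by natural numbers; symbolic constants used
    as predicate names are named by natural numbers too (p is [symc p]). *)
Inductive binop : Type := OAdd | OSub | OMul | ODiv | OMod.

Inductive pterm (T : Type) : Type :=
| PCst (c : T)
| PVar (v : nat)
| PAbs (t : pterm T)
| PBin (o : binop) (t1 t2 : pterm T)
| PIntv (t1 t2 : pterm T).
Arguments PCst {T} c.  Arguments PVar {T} v.  Arguments PAbs {T} t.
Arguments PBin {T} o t1 t2.  Arguments PIntv {T} t1 t2.

Inductive rel : Type := REq | RNeq | RLt | RGt | RLe | RGe.
Inductive sign : Type := SPos | SNot | SNotNot.

Inductive lit (T : Type) : Type :=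
| LAtom (s : sign) (p : nat) (ts : list (pterm T))
| LCmp (r : rel) (t1 t2 : pterm T).
Arguments LAtom {T} s p ts.  Arguments LCmp {T} r t1 t2.

Inductive aggop : Type := AGe | ALe.

(** body elements: literal/comparison, or count{X : L} >= t / <= t *)
Inductive belem (T : Type) : Type :=
| BLit (l : lit T)
| BCount (o : aggop) (X : list nat) (L : list (lit T)) (t : pterm T).
Arguments BLit {T} l.  Arguments BCount {T} o X L t.

Inductive head (T : Type) : Type :=
| HAtom (p : nat) (ts : list (pterm T))
| HChoice (p : nat) (ts : list (pterm T))
| HEmpty.
Arguments HAtom {T} p ts.  Arguments HChoice {T} p ts.  Arguments HEmpty {T}.

Record rule (T : Type) : Type := mkRule { rhead : head T; rbody : list (belem T) }.
Arguments mkRule {T} rhead rbody.  Arguments rhead {T} r.  Arguments rbody {T} r.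

Definition program (T : Type) := list (rule T).

Fixpoint tvars {T} (t : pterm T) : list nat :=
  match t with
  | PCst _ => []
  | PVar v => [v]
  | PAbs a => tvars a
  | PBin _ a b => tvars a ++ tvars b
  | PIntv a b => tvars a ++ tvars b
  end.

Definition lvars {T} (l : lit T) : list nat :=
  match l with
  | LAtom _ _ ts => flat_map tvars ts
  | LCmp _ a b => tvars a ++ tvars b
  end.

Definition Lvars {T} (L : list (lit T)) : list nat := flat_map lvars L.

(** occurrences outside aggregate elements *)
Definition outer_vars {T} (b : belem T) : list nat :=
  match b with
  | BLit l => lvars l
  | BCount _ _ _ t => tvars t
  end.

Definition head_vars {T} (h : head T) : list nat :=
  match h with
  | HAtom _ ts | HChoice _ ts => flat_map tvars ts
  | HEmpty => []
  end.

Definition globals {T} (R : rule T) : list nat :=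
  nodup Nat.eq_dec (head_vars (rhead R) ++ flat_map outer_vars (rbody R)).

(** V: global variables occurring in L;  W: local variables of L not in X *)
Definition vvars {T} (R : rule T) (L : list (lit T)) : list nat :=
  filter (fun v => if in_dec Nat.eq_dec v (globals R) then true else false)
         (nodup Nat.eq_dec (Lvars L)).
Definition wvars {T} (R : rule T) (X : list nat) (L : list (lit T)) : list nat :=
  filter (fun v => if in_dec Nat.eq_dec v (globals R) then false
                   else if in_dec Nat.eq_dec v X then false else true)
         (nodup Nat.eq_dec (Lvars L)).

Fixpoint no_intv {T} (t : pterm T) : Prop :=
  match t with
  | PCst _ | PVar _ => True
  | PAbs a => no_intv a
  | PBin _ a b => no_intv a /\ no_intv b
  | PIntv _ _ => False
  end.

(** well-formed aggregate atoms; purity: the members of X are local *)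
Definition wf_belem {T} (R : rule T) (b : belem T) : Prop :=
  match b with
  | BLit _ => True
  | BCount _ X L t =>
      NoDup X /\ (forall x, In x X -> In x (Lvars L)) /\ no_intv t /\
      (forall x, In x X -> ~ In x (globals R))
  end.

Definition wf_rule {T} (R : rule T) : Prop := forall b, In b (rbody R) -> wf_belem R b.
Definition wf_program {T} (Pi : program T) : Prop := forall R, In R Pi -> wf_rule R.

(** * Infinitary propositional formulas and stable models (Truszczynski 2012) *)

Inductive iform (A : Type) : Type :=
| IBot
| IAtom (a : A)
| IAnd (I : Type) (f : I -> iform A)
| IOr (I : Type) (f : I -> iform A)
| IImp (F G : iform A).
Arguments IBot {A}.  Arguments IAtom {A} a.  Arguments IAnd {A} I f.
Arguments IOr {A} I f.  Arguments IImp {A} F G.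

Definition iTop {A} : iform A := IAnd False (fun e => match e with end).
Definition iNeg {A} (F : iform A) : iform A := IImp F IBot.
Definition iOr2 {A} (F G : iform A) : iform A := IOr bool (fun b => if b then F else G).

Fixpoint isat {A} (M : A -> Prop) (F : iform A) : Prop :=
  match F with
  | IBot => False
  | IAtom a => M a
  | IAnd Ix f => forall i, isat M (f i)
  | IOr Ix f => exists i, isat M (f i)
  | IImp F G => isat M F -> isat M G
  end.

Fixpoint reduct {A} (M : A -> Prop) (F : iform A) : iform A :=
  if excluded_middle_informative (isat M F) then
    match F with
    | IBot => IBot
    | IAtom a => IAtom a
    | IAnd Ix f => IAnd Ix (fun i => reduct M (f i))
    | IOr Ix f => IOr Ix (fun i => reduct M (f i))
    | IImp F G => IImp (reduct M F) (reduct M G)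
    end
  else IBot.

Definition stable_model {A} (Phi : iform A -> Prop) (M : A -> Prop) : Prop :=
  (forall F, Phi F -> isat M (reduct M F)) /\
  (forall J : A -> Prop, (forall a, J a -> M a) ->
     (forall F, Phi F -> isat J (reduct M F)) -> forall a, M a -> J a).

(** * The translation tau *)

Section Tau.
Variable P : PT.
Notation T := (pt P).

Definition patom := (nat * list T)%type.

Fixpoint ext (vs : list nat) (xs : list T) (th : nat -> T) : nat -> T :=
  match vs, xs with
  | v :: vs', x :: xs' => fun u => if Nat.eqb u v then x else ext vs' xs' th u
  | _, _ => th
  end.

Definition binval (o : binop) (i j : Z) (r : T) : Prop :=
  match o with
  | OAdd => r = num P (i + j)
  | OSub => r = num P (i - j)
  | OMul => r = num P (i * j)
  | ODiv => exists k, (k * Z.abs j <= Z.abs i < (k + 1) * Z.abs j)%Z /\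
             (((i * j >= 0)%Z /\ r = num P k) \/ ((i * j < 0)%Z /\ r = num P (- k)))
  | OMod => exists k, (k * Z.abs j <= Z.abs i < (k + 1) * Z.abs j)%Z /\
             (((i * j >= 0)%Z /\ r = num P (i - k * j)) \/
              ((i * j < 0)%Z /\ r = num P (i + k * j)))
  end.

Fixpoint tval (th : nat -> T) (t : pterm T) (r : T) : Prop :=
  match t with
  | PCst c => r = c
  | PVar v => r = th v
  | PAbs a => exists i, tval th a (num P i) /\ r = num P (Z.abs i)
  | PBin o a b => exists i j, tval th a (num P i) /\ tval th b (num P j) /\ binval o i j r
  | PIntv a b => exists i j k, tval th a (num P i) /\ tval th b (num P j) /\
                   (i <= k <= j)%Z /\ r = num P k
  end.

Definition relP (r : rel) (a b : T) : Prop :=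
  match r with
  | REq => a = b
  | RNeq => a <> b
  | RLt => ptlt P a b
  | RGt => ptlt P b a
  | RLe => ptlt P a b \/ a = b
  | RGe => ptlt P b a \/ a = b
  end.

Definition signed (s : sign) (F : iform patom) : iform patom :=
  match s with SPos => F | SNot => iNeg F | SNotNot => iNeg (iNeg F) end.

Definition tau_lit (th : nat -> T) (l : lit T) : iform patom :=
  match l with
  | LAtom s p ts =>
      IOr {rs : list T | Forall2 (tval th) ts rs} (fun rs => signed s (IAtom (p, proj1_sig rs)))
  | LCmp r t1 t2 =>
      if excluded_middle_informative
           (exists a b, tval th t1 a /\ tval th t2 b /\ relP r a b)
      then iTop else IBot
  end.

Definition tau_conj (th : nat -> T) (L : list (lit T)) : iform patom :=
  IAnd {l : lit T | In l L} (fun l => tau_lit th (proj1_sig l)).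

(** finite sets Delta of |X|-tuples of precomputed terms (duplicate-free lists) *)
Definition delta_ok (k : nat) (D : list (list T)) : Prop :=
  NoDup D /\ Forall (fun x => length x = k) D.

Definition tau_elem (th : nat -> T) (X W : list nat) (L : list (lit T)) (x : list T)
  : iform patom :=
  IOr {w : list T | length w = length W} (fun w => tau_conj (ext X x (ext W (proj1_sig w) th)) L).

Definition tau_belem (R : rule T) (th : nat -> T) (b : belem T) : iform patom :=
  match b with
  | BLit l => tau_lit th l
  | BCount AGe X L t =>
      let W := wvars R X L in
      IOr {c : T | tval th t c} (fun c =>
        IOr {D : list (list T) | delta_ok (length X) D /\
                                 (ptlt P (proj1_sig c) (num P (Z.of_nat (length D))) \/
                                  proj1_sig c = num P (Z.of_nat (length D)))}
            (fun D => IAnd {x : list T | In x (proj1_sig D)}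
                           (fun x => tau_elem th X W L (proj1_sig x))))
  | BCount ALe X L t =>
      let W := wvars R X L in
      IOr {c : T | tval th t c} (fun c =>
        IAnd {D : list (list T) | delta_ok (length X) D /\
                                  ptlt P (proj1_sig c) (num P (Z.of_nat (length D)))}
            (fun D => iNeg (IAnd {x : list T | In x (proj1_sig D)}
                                 (fun x => tau_elem th X W L (proj1_sig x)))))
  end.

Definition tau_rule (R : rule T) : iform patom :=
  IAnd {xs : list T | length xs = length (globals R)} (fun xs =>
    let th := ext (globals R) (proj1_sig xs) (fun _ => num P 0) in
    let B := IAnd {b : belem T | In b (rbody R)} (fun b => tau_belem R th (proj1_sig b)) in
    match rhead R with
    | HAtom p ts =>
        IImp B (IAnd {rs : list T | Forall2 (tval th) ts rs}
                     (fun rs => IAtom (p, proj1_sig rs)))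
    | HChoice p ts =>
        IImp B (IAnd {rs : list T | Forall2 (tval th) ts rs}
                     (fun rs => iOr2 (IAtom (p, proj1_sig rs)) (iNeg (IAtom (p, proj1_sig rs)))))
    | HEmpty => iNeg B
    end).

Definition tau_prog (Pi : program T) : iform patom :=
  IAnd {R : rule T | In R Pi} (fun R => tau_rule (proj1_sig R)).

Definition strongly_equivalent (Pi1 Pi2 : program T) : Prop :=
  forall (Phi : iform patom -> Prop) (M : patom -> Prop),
    stable_model (fun F => F = tau_prog Pi1 \/ Phi F) M <->
    stable_model (fun F => F = tau_prog Pi2 \/ Phi F) M.

End Tau.

(** * Two-sorted first-order formulas over sigma_0 / sigma_2 *)

Inductive sort : Type := SG | SI .
Definition var := (sort * nat)%type.
Definition var_eq_dec : forall x y : var, {x = y} + {x <> y}.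
Proof. decide equality; [apply Nat.eq_dec | decide equality]. Defined.
Definition var_eqb (x y : var) : bool := if var_eq_dec x y then true else false.

Inductive fterm (T : Type) : Type :=
| FVar (x : var)
| FCst (c : T)
| FAbs (t : fterm T)
| FAdd (t1 t2 : fterm T)
| FSub (t1 t2 : fterm T)
| FMul (t1 t2 : fterm T).
Arguments FVar {T} x.  Arguments FCst {T} c.  Arguments FAbs {T} t.
Arguments FAdd {T} t1 t2.  Arguments FSub {T} t1 t2.  Arguments FMul {T} t1 t2.

Inductive pred0 : Type := PSym (p : nat) (n : nat) | PNeq | PLt | PGt | PLe | PGe.

Inductive form (T Pr : Type) : Type :=
| FBot
| FPred (p : Pr) (args : list (fterm T))
| FEq (t1 t2 : fterm T)
| FAnd (A B : form T Pr)
| FOr (A B : form T Pr)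
| FImp (A B : form T Pr)
| FAll (x : var) (A : form T Pr)
| FEx (x : var) (A : form T Pr).
Arguments FBot {T Pr}.  Arguments FPred {T Pr} p args.  Arguments FEq {T Pr} t1 t2.
Arguments FAnd {T Pr} A B.  Arguments FOr {T Pr} A B.  Arguments FImp {T Pr} A B.
Arguments FAll {T Pr} x A.  Arguments FEx {T Pr} x A.

(** predicate constants of sigma_2: those of sigma_0, Atleast^{X;V}_F, Atmost^{X;V}_F,
    Start^{X;V}_F  (X, V lists of general variables, given by their indices) *)
Inductive pred2 (T : Type) : Type :=
| P0 (p : pred0)
| PAtleast (X V : list nat) (F : form T pred0)
| PAtmost (X V : list nat) (F : form T pred0)
| PStart (X V : list nat) (F : form T pred0).
Arguments P0 {T} p.  Arguments PAtleast {T} X V F.  Arguments PAtmost {T} X V F.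
Arguments PStart {T} X V F.

Definition FNot {T Pr} (A : form T Pr) : form T Pr := FImp A FBot.
Definition FIff {T Pr} (A B : form T Pr) : form T Pr := FAnd (FImp A B) (FImp B A).
Definition FTop {T Pr} : form T Pr := FImp FBot FBot.

Fixpoint bigAnd {T Pr} (l : list (form T Pr)) : form T Pr :=
  match l with [] => FTop | [A] => A | A :: l' => FAnd A (bigAnd l') end.
Fixpoint bigOr {T Pr} (l : list (form T Pr)) : form T Pr :=
  match l with [] => FBot | [A] => A | A :: l' => FOr A (bigOr l') end.
Definition alls {T Pr} (xs : list var) (A : form T Pr) : form T Pr := fold_right FAll A xs.
Definition exs {T Pr} (xs : list var) (A : form T Pr) : form T Pr := fold_right FEx A xs.

Definition gv (X : list nat) : list var := map (fun n => (SG, n)) X.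
Definition vts {T} (xs : list var) : list (fterm T) := map FVar xs.

Fixpoint ftvars {T} (t : fterm T) : list var :=
  match t with
  | FVar x => [x]
  | FCst _ => []
  | FAbs a => ftvars a
  | FAdd a b | FSub a b | FMul a b => ftvars a ++ ftvars b
  end.

Fixpoint fv {T Pr} (A : form T Pr) : list var :=
  match A with
  | FBot => []
  | FPred _ args => flat_map ftvars args
  | FEq a b => ftvars a ++ ftvars b
  | FAnd A B | FOr A B | FImp A B => fv A ++ fv B
  | FAll x A | FEx x A => filter (fun y => negb (var_eqb y x)) (fv A)
  end.

Definition free {T Pr} (x : var) (A : form T Pr) : Prop := In x (fv A).
Definition sentence {T Pr} (A : form T Pr) : Prop := fv A = [].

Definition closure {T Pr} (A : form T Pr) : form T Pr := alls (nodup var_eq_dec (fv A)) A.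

Fixpoint tsubst {T} (x : var) (s t : fterm T) : fterm T :=
  match t with
  | FVar y => if var_eqb y x then s else FVar y
  | FCst c => FCst c
  | FAbs a => FAbs (tsubst x s a)
  | FAdd a b => FAdd (tsubst x s a) (tsubst x s b)
  | FSub a b => FSub (tsubst x s a) (tsubst x s b)
  | FMul a b => FMul (tsubst x s a) (tsubst x s b)
  end.

Fixpoint subst {T Pr} (x : var) (s : fterm T) (A : form T Pr) : form T Pr :=
  match A with
  | FBot => FBot
  | FPred p args => FPred p (map (tsubst x s) args)
  | FEq a b => FEq (tsubst x s a) (tsubst x s b)
  | FAnd A B => FAnd (subst x s A) (subst x s B)
  | FOr A B => FOr (subst x s A) (subst x s B)
  | FImp A B => FImp (subst x s A) (subst x s B)
  | FAll y A => if var_eqb y x then FAll y A else FAll y (subst x s A)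
  | FEx y A => if var_eqb y x then FEx y A else FEx y (subst x s A)
  end.

Fixpoint free_for {T Pr} (x : var) (s : fterm T) (A : form T Pr) : Prop :=
  match A with
  | FBot | FPred _ _ | FEq _ _ => True
  | FAnd A B | FOr A B | FImp A B => free_for x s A /\ free_for x s B
  | FAll y A | FEx y A =>
      if var_eqb y x then True
      else ((~ free x A \/ ~ In y (ftvars s)) /\ free_for x s A)
  end.

Fixpoint emb {T} (A : form T pred0) : form T (pred2 T) :=
  match A with
  | FBot => FBot
  | FPred p args => FPred (P0 p) args
  | FEq a b => FEq a b
  | FAnd A B => FAnd (emb A) (emb B)
  | FOr A B => FOr (emb A) (emb B)
  | FImp A B => FImp (emb A) (emb B)
  | FAll x A => FAll x (emb A)
  | FEx x A => FEx x (emb A)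
  end.

Fixpoint wf_form {T Pr} (wt : fterm T -> Prop) (pw : Pr -> list (fterm T) -> Prop)
  (A : form T Pr) : Prop :=
  match A with
  | FBot => True
  | FPred p args => pw p args
  | FEq a b => wt a /\ wt b
  | FAnd A B | FOr A B | FImp A B => wf_form wt pw A /\ wf_form wt pw B
  | FAll _ A | FEx _ A => wf_form wt pw A
  end.

Fixpoint no_psym {T} (A : form T pred0) : Prop :=
  match A with
  | FBot | FEq _ _ => True
  | FPred (PSym _ _) _ => False
  | FPred _ _ => True
  | FAnd A B | FOr A B | FImp A B => no_psym A /\ no_psym B
  | FAll _ A | FEx _ A => no_psym A
  end.

Section FO.
Variable P : PT.
Notation T := (pt P).
Notation form0 := (form T pred0).
Notation form2 := (form T (pred2 T)).

Fixpoint int_term (t : fterm T) : Prop :=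
  match t with
  | FVar (SI, _) => True
  | FVar (SG, _) => False
  | FCst c => exists n, c = num P n
  | FAbs a => int_term a
  | FAdd a b | FSub a b | FMul a b => int_term a /\ int_term b
  end.

Definition wf_term (t : fterm T) : Prop :=
  match t with
  | FVar _ | FCst _ => True
  | FAbs a => int_term a
  | FAdd a b | FSub a b | FMul a b => int_term a /\ int_term b
  end.

Definition sort_ok (x : var) (t : fterm T) : Prop :=
  match fst x with SI => int_term t | SG => wf_term t end.

Definition wf_pred0 (p : pred0) (args : list (fterm T)) : Prop :=
  Forall wf_term args /\
  match p with PSym _ n => length args = n | _ => length args = 2 end.

Definition wf0 (A : form0) : Prop := wf_form wf_term wf_pred0 A.

Definition sig_ok (X V : list nat) (F : form0) : Prop :=
  NoDup (X ++ V) /\ wf0 F /\ (forall y, free y F -> In y (gv (X ++ V))).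

Definition wf_pred2 (p : pred2 T) (args : list (fterm T)) : Prop :=
  match p with
  | P0 q => wf_pred0 q args
  | PAtleast X V F | PAtmost X V F =>
      sig_ok X V F /\ Forall wf_term args /\ length args = length V + 1
  | PStart X V F =>
      sig_ok X V F /\ Forall wf_term args /\ length args = length X + length V + 1 /\
      exists a t, args = a ++ [t] /\ int_term t
  end.

Definition wf2 (A : form2) : Prop := wf_form wf_term wf_pred2 A.

Definition upd (rho : var -> T) (x : var) (r : T) : var -> T :=
  fun y => if var_eqb y x then r else rho y.

Fixpoint tev (rho : var -> T) (t : fterm T) (r : T) : Prop :=
  match t with
  | FVar x => r = rho x
  | FCst c => r = c
  | FAbs a => exists i, tev rho a (num P i) /\ r = num P (Z.abs i)
  | FAdd a b => exists i j, tev rho a (num P i) /\ tev rho b (num P j) /\ r = num P (i + j)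
  | FSub a b => exists i j, tev rho a (num P i) /\ tev rho b (num P j) /\ r = num P (i - j)
  | FMul a b => exists i j, tev rho a (num P i) /\ tev rho b (num P j) /\ r = num P (i * j)
  end.

Definition pinterp (p : pred0) (rs : list T) : Prop :=
  match p, rs with
  | PNeq, [a; b] => a <> b
  | PLt, [a; b] => ptlt P a b
  | PGt, [a; b] => ptlt P b a
  | PLe, [a; b] => ptlt P a b \/ a = b
  | PGe, [a; b] => ptlt P b a \/ a = b
  | _, _ => False
  end.

Fixpoint ssat (rho : var -> T) (A : form0) : Prop :=
  match A with
  | FBot => False
  | FPred p args => exists rs, Forall2 (tev rho) args rs /\ pinterp p rs
  | FEq a b => exists r, tev rho a r /\ tev rho b r
  | FAnd A B => ssat rho A /\ ssat rho B
  | FOr A B => ssat rho A \/ ssat rho B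
  | FImp A B => ssat rho A -> ssat rho B
  | FAll x A => match fst x with
                | SG => forall r, ssat (upd rho x r) A
                | SI => forall n, ssat (upd rho x (num P n)) A
                end
  | FEx x A => match fst x with
               | SG => exists r, ssat (upd rho x r) A
               | SI => exists n, ssat (upd rho x (num P n)) A
               end
  end.

Definition Std (A : form2) : Prop :=
  exists B : form0, A = emb B /\ wf0 B /\ sentence B /\ no_psym B /\
    forall rho, ssat rho B.

Definition ncst (n : Z) : fterm T := FCst (num P n).
Definition cmp2 (p : pred0) (a b : fterm T) : form2 := FPred (P0 p) [a; b].

Definition Ind (A : form2) : Prop :=
  exists (F : form2) (n : nat),
    let N := FVar (SI, n) in
    wf2 F /\
    A = closure
          (FImp (FAnd (subst (SI, n) (ncst 0) F)
                      (FAll (SI, n) (FImp (FAnd (cmp2 PGe N (ncst 0)) F)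
                                          (subst (SI, n) (FAdd N (ncst 1)) F))))
                (FAll (SI, n) (FImp (cmp2 PGe N (ncst 0)) F))).

Definition start_atom (X V : list nat) (F : form0) (xs : list nat) (t : fterm T) : form2 :=
  FPred (PStart X V F) (vts (gv xs) ++ vts (gv V) ++ [t]).

Fixpoint lex_disj (xs us : list nat) (eqs : list form2) : list form2 :=
  match xs, us with
  | x :: xs', u :: us' =>
      FAnd (cmp2 PLt (FVar (SG, x)) (FVar (SG, u))) (bigAnd eqs)
        :: lex_disj xs' us' (eqs ++ [FEq (FVar (SG, x)) (FVar (SG, u))])
  | _, _ => []
  end.
Definition lexlt (xs us : list nat) : form2 := bigOr (lex_disj xs us []).

Definition D0 (A : form2) : Prop :=
  exists (X V : list nat) (F : form0) (U : list nat) (n : nat),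
    let N := FVar (SI, n) in
    sig_ok X V F /\ NoDup U /\ length U = length X /\
    (forall u, In u U -> ~ In u (X ++ V)) /\
    (A = alls (gv X ++ gv V ++ [(SI, n)])
              (FImp (cmp2 PLe N (ncst 0)) (start_atom X V F X N))
     \/ A = alls (gv X ++ gv V) (FIff (start_atom X V F X (ncst 1)) (emb F))
     \/ A = alls (gv X ++ gv V ++ [(SI, n)])
              (FImp (cmp2 PGt N (ncst 0))
                 (FIff (start_atom X V F X (FAdd N (ncst 1)))
                       (FAnd (emb F) (exs (gv U) (FAnd (lexlt X U) (start_atom X V F U N))))))).

Definition D1 (A : form2) : Prop :=
  exists (X V : list nat) (F : form0) (y n : nat),
    let N := FVar (SI, n) in
    let Y := FVar (SG, y) in
    sig_ok X V F /\ ~ In y (X ++ V) /\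
    (A = alls (gv V ++ [(SG, y)])
              (FIff (FPred (PAtleast X V F) (vts (gv V) ++ [Y]))
                    (exs (gv X ++ [(SI, n)]) (FAnd (start_atom X V F X N) (cmp2 PGe N Y))))
     \/ A = alls (gv V ++ [(SG, y)])
              (FIff (FPred (PAtmost X V F) (vts (gv V) ++ [Y]))
                    (alls (gv X ++ [(SI, n)]) (FImp (start_atom X V F X N) (cmp2 PLe N Y))))).

Definition HT_axioms (A : form2) : Prop :=
  (exists F G, wf2 F /\ wf2 G /\ A = FOr F (FOr (FImp F G) (FNot G))) \/
  (exists x F, wf2 F /\ A = FEx x (FImp F (FAll x F))) \/
  Std A \/ Ind A \/ D0 A \/ D1 A.

Inductive Prov (Ax : form2 -> Prop) : form2 -> Prop :=
| H_ax A : wf2 A -> Ax A -> Prov Ax A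
| H_K A B : wf2 A -> wf2 B -> Prov Ax (FImp A (FImp B A))
| H_S A B C : wf2 A -> wf2 B -> wf2 C ->
    Prov Ax (FImp (FImp A (FImp B C)) (FImp (FImp A B) (FImp A C)))
| H_andE1 A B : wf2 A -> wf2 B -> Prov Ax (FImp (FAnd A B) A)
| H_andE2 A B : wf2 A -> wf2 B -> Prov Ax (FImp (FAnd A B) B)
| H_andI A B : wf2 A -> wf2 B -> Prov Ax (FImp A (FImp B (FAnd A B)))
| H_orI1 A B : wf2 A -> wf2 B -> Prov Ax (FImp A (FOr A B))
| H_orI2 A B : wf2 A -> wf2 B -> Prov Ax (FImp B (FOr A B))
| H_orE A B C : wf2 A -> wf2 B -> wf2 C ->
    Prov Ax (FImp (FImp A C) (FImp (FImp B C) (FImp (FOr A B) C)))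
| H_bot A : wf2 A -> Prov Ax (FImp FBot A)
| H_allE x A t : wf2 A -> sort_ok x t -> free_for x t A ->
    Prov Ax (FImp (FAll x A) (subst x t A))
| H_exI x A t : wf2 A -> sort_ok x t -> free_for x t A ->
    Prov Ax (FImp (subst x t A) (FEx x A))
| H_refl t : wf_term t -> Prov Ax (FEq t t)
| H_eq x A s t : wf2 A -> sort_ok x s -> sort_ok x t -> free_for x s A -> free_for x t A ->
    Prov Ax (FImp (FEq s t) (FImp (subst x s A) (subst x t A)))
| H_mp A B : Prov Ax A -> Prov Ax (FImp A B) -> Prov Ax B
| H_allI x A B : Prov Ax (FImp B A) -> ~ free x B -> Prov Ax (FImp B (FAll x A))
| H_exE x A B : Prov Ax (FImp A B) -> ~ free x B -> Prov Ax (FImp (FEx x A) B).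

Definition HT_provable (A : form2) : Prop := Prov HT_axioms A.

(** fresh-variable state: next unused general index, next unused integer index *)
Definition st := (nat * nat)%type.

Definition op2 (o : binop) (a b : fterm T) : fterm T :=
  match o with OAdd => FAdd a b | OSub => FSub a b | _ => FMul a b end.

Fixpoint val (t : pterm T) (z : var) (s : st) : form0 * st :=
  match t with
  | PCst c => (FEq (FVar z) (FCst c), s)
  | PVar v => (FEq (FVar z) (FVar (SG, v)), s)
  | PAbs a =>
      let i := (SI, snd s) in
      let '(F1, s1) := val a i (fst s, S (snd s)) in
      (FEx i (FAnd F1 (FEq (FVar z) (FAbs (FVar i)))), s1)
  | PBin o a b =>
      let i := (SI, snd s) in let j := (SI, S (snd s)) in let k := (SI, S (S (snd s))) in
      let I := FVar i in let J := FVar j in let K := FVar k in let Zt := FVar z in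
      let '(F1, s1) := val a i (fst s, 3 + snd s) in
      let '(F2, s2) := val b j s1 in
      let divc := FAnd (FPred (PLe) [FMul K (FAbs J); FAbs I])
                       (FPred (PLt) [FAbs I; FMul (FAdd K (FCst (num P 1))) (FAbs J)]) in
      let pos := FPred PGe [FMul I J; FCst (num P 0)] in
      let neg := FPred PLt [FMul I J; FCst (num P 0)] in
      (match o with
       | ODiv =>
           exs [i; j; k] (FAnd F1 (FAnd F2 (FAnd divc
             (FOr (FAnd pos (FEq Zt K)) (FAnd neg (FEq Zt (FSub (FCst (num P 0)) K)))))))
       | OMod =>
           exs [i; j; k] (FAnd F1 (FAnd F2 (FAnd divc
             (FOr (FAnd pos (FEq Zt (FSub I (FMul K J))))
                  (FAnd neg (FEq Zt (FAdd I (FMul K J))))))))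
       | _ => exs [i; j] (FAnd F1 (FAnd F2 (FEq Zt (op2 o I J))))
       end, s2)
  | PIntv a b =>
      let i := (SI, snd s) in let j := (SI, S (snd s)) in let k := (SI, S (S (snd s))) in
      let '(F1, s1) := val a i (fst s, 3 + snd s) in
      let '(F2, s2) := val b j s1 in
      (exs [i; j; k] (FAnd F1 (FAnd F2 (FAnd
          (FAnd (FPred PLe [FVar i; FVar k]) (FPred PLe [FVar k; FVar j]))
          (FEq (FVar z) (FVar k))))), s2)
  end.

Fixpoint val_list (ts : list (pterm T)) (zs : list var) (s : st) : list form0 * st :=
  match ts, zs with
  | t :: ts', z :: zs' =>
      let '(F, s1) := val t z s in
      let '(Fs, s2) := val_list ts' zs' s1 in (F :: Fs, s2)
  | _, _ => ([], s)
  end.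

Fixpoint fresh_gens (n : nat) (s : st) : list var * st :=
  match n with
  | O => ([], s)
  | S n' => let '(zs, s1) := fresh_gens n' (S (fst s), snd s) in ((SG, fst s) :: zs, s1)
  end.

Definition cmp_form (r : rel) (a b : fterm T) : form0 :=
  match r with
  | REq => FEq a b
  | RNeq => FPred PNeq [a; b]
  | RLt => FPred PLt [a; b]
  | RGt => FPred PGt [a; b]
  | RLe => FPred PLe [a; b]
  | RGe => FPred PGe [a; b]
  end.

Definition signedF {Pr} (sg : sign) (A : form T Pr) : form T Pr :=
  match sg with SPos => A | SNot => FNot A | SNotNot => FNot (FNot A) end.

Definition tauB_lit (l : lit T) (s : st) : form0 * st :=
  match l with
  | LAtom sg p ts =>
      let '(zs, s1) := fresh_gens (length ts) s in
      let '(Fs, s2) := val_list ts zs s1 in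
      (exs zs (FAnd (bigAnd Fs) (signedF sg (FPred (PSym p (length ts)) (vts zs)))), s2)
  | LCmp r a b =>
      let z1 := (SG, fst s) in let z2 := (SG, S (fst s)) in
      let '(F1, s1) := val a z1 (2 + fst s, snd s) in
      let '(F2, s2) := val b z2 s1 in
      (exs [z1; z2] (FAnd F1 (FAnd F2 (cmp_form r (FVar z1) (FVar z2)))), s2)
  end.

Fixpoint tauB_list (L : list (lit T)) (s : st) : list form0 * st :=
  match L with
  | [] => ([], s)
  | l :: L' => let '(F, s1) := tauB_lit l s in
               let '(Fs, s2) := tauB_list L' s1 in (F :: Fs, s2)
  end.

Definition star (R : rule T) (b : belem T) (s : st) : form2 * st :=
  match b with
  | BLit l => let '(F, s1) := tauB_lit l s in (emb F, s1)
  | BCount o X L t =>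
      let c := (SG, fst s) in
      let '(Ft, s1) := val t c (S (fst s), snd s) in
      let '(FL, s2) := tauB_list L s1 in
      let V := vvars R L in
      let W := wvars R X L in
      let F := exs (gv W) (bigAnd FL) in
      let pr := match o with AGe => PAtleast X V F | ALe => PAtmost X V F end in
      (FEx c (FAnd (emb Ft) (FPred pr (vts (gv V) ++ [FVar c]))), s2)
  end.

Fixpoint star_list (R : rule T) (bs : list (belem T)) (s : st) : list form2 * st :=
  match bs with
  | [] => ([], s)
  | b :: bs' => let '(F, s1) := star R b s in
                let '(Fs, s2) := star_list R bs' s1 in (F :: Fs, s2)
  end.

Definition tau_star_rule (R : rule T) (s : st) : form2 * st :=
  let '(Bs, s1) := star_list R (rbody R) s in
  match rhead R with
  | HAtom p ts =>
      let '(zs, s2) := fresh_gens (length ts) s1 in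
      let '(Fs, s3) := val_list ts zs s2 in
      (closure (FImp (bigAnd (Bs ++ [emb (bigAnd Fs)]))
                     (FPred (P0 (PSym p (length ts))) (vts zs))), s3)
  | HChoice p ts =>
      let '(zs, s2) := fresh_gens (length ts) s1 in
      let '(Fs, s3) := val_list ts zs s2 in
      let a := FPred (P0 (PSym p (length ts))) (vts zs) in
      (closure (FImp (bigAnd (Bs ++ [emb (bigAnd Fs)])) (FOr a (FNot a))), s3)
  | HEmpty => (closure (FNot (bigAnd Bs)), s1)
  end.

Fixpoint tau_star_rules (Pi : program T) (s : st) : list form2 :=
  match Pi with
  | [] => []
  | R :: Pi' => let '(F, s1) := tau_star_rule R s in F :: tau_star_rules Pi' s1
  end.

Definition belem_allvars (b : belem T) : list nat :=
  match b with
  | BLit l => lvars l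
  | BCount _ X L t => X ++ Lvars L ++ tvars t
  end.
Definition prog_vars (Pi : program T) : list nat :=
  flat_map (fun R => head_vars (rhead R) ++ flat_map belem_allvars (rbody R)) Pi.

(** tau* Pi; fresh general variables are chosen above all program variables *)
Definition tau_star (Pi : program T) : form2 :=
  bigAnd (tau_star_rules Pi (S (list_max (prog_vars Pi)), 0)).

End FO.

(* Main.v *)
Require Import Defs.
From Stdlib Require Import ZArith List Arith Bool Lia Classical ClassicalEpsilon.
Import ListNotations.

Section Sem.
Variable P : PT.
Notation T := (pt P).

Definition acc (w' w : bool) : Prop := w' = w \/ w' = false.

Fixpoint hs {Pr} (pi : bool -> Pr -> list T -> Prop) (w : bool) (rho : var -> T)
  (A : form T Pr) {struct A} : Prop :=
  match A with
  | FBot => False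
  | FPred p args => exists rs, Forall2 (tev P rho) args rs /\ pi w p rs
  | FEq a b => exists r, tev P rho a r /\ tev P rho b r
  | FAnd A B => hs pi w rho A /\ hs pi w rho B
  | FOr A B => hs pi w rho A \/ hs pi w rho B
  | FImp A B => forall w', acc w' w -> hs pi w' rho A -> hs pi w' rho B
  | FAll x A => match fst x with
                | SG => forall r, hs pi w (upd P rho x r) A
                | SI => forall n, hs pi w (upd P rho x (num P n)) A
                end
  | FEx x A => match fst x with
               | SG => exists r, hs pi w (upd P rho x r) A
               | SI => exists n, hs pi w (upd P rho x (num P n)) A
               end
  end.

Definition wsr (rho : var -> T) := forall n, exists k, rho (SI, n) = num P k.

Lemma var_eqb_refl x : var_eqb x x = true.
Proof. unfold var_eqb; destruct (var_eq_dec x x); congruence. Qed.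
Lemma var_eqb_neq x y : x <> y -> var_eqb x y = false.
Proof. unfold var_eqb; destruct (var_eq_dec x y); congruence. Qed.
Lemma var_eqb_true x y : var_eqb x y = true -> x = y.
Proof. unfold var_eqb; destruct (var_eq_dec x y); congruence. Qed.

Lemma upd_eq rho x r : upd P rho x r x = r.
Proof. unfold upd; now rewrite var_eqb_refl. Qed.
Lemma upd_neq rho x r y : y <> x -> upd P rho x r y = rho y.
Proof. intros; unfold upd; now rewrite var_eqb_neq. Qed.

Lemma acc_refl w : acc w w. Proof. left; auto. Qed.
Lemma acc_false w : acc false w. Proof. right; auto. Qed.
Lemma acc_trans a b c : acc a b -> acc b c -> acc a c.
Proof. unfold acc; intuition congruence. Qed.

Lemma tev_det rho t r1 r2 : tev P rho t r1 -> tev P rho t r2 -> r1 = r2.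
Proof.
  revert r1 r2; induction t; simpl; intros r1 r2 H1 H2.
  - congruence.
  - congruence.
  - destruct H1 as [i [Hi ->]]; destruct H2 as [j [Hj ->]].
    pose proof (IHt _ _ Hi Hj) as E; apply num_inj in E; subst; auto.
  - destruct H1 as [i [j [Hi [Hj ->]]]]; destruct H2 as [i' [j' [Hi' [Hj' ->]]]].
    pose proof (IHt1 _ _ Hi Hi') as E; apply num_inj in E;
    pose proof (IHt2 _ _ Hj Hj') as E'; apply num_inj in E'; subst; auto.
  - destruct H1 as [i [j [Hi [Hj ->]]]]; destruct H2 as [i' [j' [Hi' [Hj' ->]]]].
    pose proof (IHt1 _ _ Hi Hi') as E; apply num_inj in E;
    pose proof (IHt2 _ _ Hj Hj') as E'; apply num_inj in E'; subst; auto.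
  - destruct H1 as [i [j [Hi [Hj ->]]]]; destruct H2 as [i' [j' [Hi' [Hj' ->]]]].
    pose proof (IHt1 _ _ Hi Hi') as E; apply num_inj in E;
    pose proof (IHt2 _ _ Hj Hj') as E'; apply num_inj in E'; subst; auto.
Qed.

Lemma tev_ext rho1 rho2 t :
  (forall y, In y (ftvars t) -> rho1 y = rho2 y) ->
  forall r, tev P rho1 t r <-> tev P rho2 t r.
Proof.
  induction t; simpl; intros H r.
  - rewrite H; auto; tauto.
  - tauto.
  - split; intros [i [Hi E]]; exists i; split; auto; apply (IHt H); auto.
  - split; intros [i [j [Hi [Hj E]]]]; exists i, j;
      (split; [apply (IHt1 (fun y h => H y (in_or_app _ _ _ (or_introl h)))); auto
              | split; [apply (IHt2 (fun y h => H y (in_or_app _ _ _ (or_intror h)))); auto | auto]]).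
  - split; intros [i [j [Hi [Hj E]]]]; exists i, j;
      (split; [apply (IHt1 (fun y h => H y (in_or_app _ _ _ (or_introl h)))); auto
              | split; [apply (IHt2 (fun y h => H y (in_or_app _ _ _ (or_intror h)))); auto | auto]]).
  - split; intros [i [j [Hi [Hj E]]]]; exists i, j;
      (split; [apply (IHt1 (fun y h => H y (in_or_app _ _ _ (or_introl h)))); auto
              | split; [apply (IHt2 (fun y h => H y (in_or_app _ _ _ (or_intror h)))); auto | auto]]).
Qed.

Lemma Forall2_tev_ext rho1 rho2 args :
  (forall y, In y (flat_map ftvars args) -> rho1 y = rho2 y) ->
  forall rs, Forall2 (tev P rho1) args rs <-> Forall2 (tev P rho2) args rs.
Proof.
  induction args as [|a args IH]; simpl; intros H rs.
  - split; intros HF; inversion HF; constructor.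
  - split; intros HF; inversion HF; subst; constructor.
    + apply (tev_ext rho1 rho2); auto. intros; apply H, in_or_app; auto.
    + apply IH; auto. intros; apply H, in_or_app; auto.
    + apply (tev_ext rho1 rho2); auto. intros; apply H, in_or_app; auto.
    + apply IH; auto. intros; apply H, in_or_app; auto.
Qed.

Lemma in_filter_neq y x l : In y l -> y <> x -> In y (filter (fun z => negb (var_eqb z x)) l).
Proof. intros; apply filter_In; split; auto. rewrite var_eqb_neq; auto. Qed.

Lemma hs_ext {Pr} (pi : bool -> Pr -> list T -> Prop) (A : form T Pr) :
  forall w rho1 rho2, (forall y, In y (fv A) -> rho1 y = rho2 y) ->
  hs pi w rho1 A <-> hs pi w rho2 A.
Proof.
  induction A; simpl; intros w rho1 rho2 H.
  - tauto.
  - split; intros [rs [H1 H2]]; exists rs; split; auto; apply (Forall2_tev_ext rho1 rho2); auto.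
  - split; intros [r [H1 H2]]; exists r; split;
      try (apply (tev_ext rho1 rho2); [intros; apply H, in_or_app; auto|]; auto).
  - rewrite (IHA1 w rho1 rho2), (IHA2 w rho1 rho2); [tauto| |]; intros; apply H, in_or_app; auto.
  - rewrite (IHA1 w rho1 rho2), (IHA2 w rho1 rho2); [tauto| |]; intros; apply H, in_or_app; auto.
  - split; intros Hi w' Ha.
    + rewrite <- (IHA1 w' rho1 rho2), <- (IHA2 w' rho1 rho2); auto;
        intros; apply H, in_or_app; auto.
    + rewrite (IHA1 w' rho1 rho2), (IHA2 w' rho1 rho2); auto;
        intros; apply H, in_or_app; auto.
  - assert (E : forall r, forall y, In y (fv A) -> upd P rho1 x r y = upd P rho2 x r y).
    { intros r y Hy. unfold upd. destruct (var_eqb y x) eqn:E; auto.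
      apply H. apply filter_In; rewrite E; auto. }
    destruct (fst x); split; intros Hq r; [rewrite <- (IHA w _ _ (E r)) | rewrite (IHA w _ _ (E r))
      | rewrite <- (IHA w _ _ (E _)) | rewrite (IHA w _ _ (E _))]; auto.
  - assert (E : forall r, forall y, In y (fv A) -> upd P rho1 x r y = upd P rho2 x r y).
    { intros r y Hy. unfold upd. destruct (var_eqb y x) eqn:E; auto.
      apply H. apply filter_In; rewrite E; auto. }
    destruct (fst x); split; intros [r Hq]; exists r;
      [rewrite <- (IHA w _ _ (E r)) | rewrite (IHA w _ _ (E r))
      | rewrite <- (IHA w _ _ (E _)) | rewrite (IHA w _ _ (E _))]; auto.
Qed.

Lemma hs_persist {Pr} (pi : bool -> Pr -> list T -> Prop)
  (Hpi : forall p rs, pi true p rs -> pi false p rs) (A : form T Pr) :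
  forall w w' rho, acc w' w -> hs pi w rho A -> hs pi w' rho A.
Proof.
  induction A; simpl; intros w w' rho Ha H; auto.
  - destruct H as [rs [H1 H2]]; exists rs; split; auto.
    destruct Ha as [->| ->]; auto. destruct w; auto.
  - destruct H; split; eauto.
  - destruct H; [left|right]; eauto.
  - intros w'' Ha'; apply H. eapply acc_trans; eauto.
  - destruct (fst x); intros r; eauto.
  - destruct (fst x); destruct H as [r Hr]; exists r; eauto.
Qed.

Lemma tsubst_notin x (t u : fterm T) : ~ In x (ftvars u) -> tsubst x t u = u.
Proof.
  induction u; simpl; intros H; auto.
  - destruct (var_eqb x0 x) eqn:E; auto. apply var_eqb_true in E; subst; tauto.
  - rewrite IHu; auto.
  - rewrite IHu1, IHu2; auto; intro; apply H, in_or_app; auto.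
  - rewrite IHu1, IHu2; auto; intro; apply H, in_or_app; auto.
  - rewrite IHu1, IHu2; auto; intro; apply H, in_or_app; auto.
Qed.

Lemma subst_notfree {Pr} x (t : fterm T) (A : form T Pr) : ~ free x A -> subst x t A = A.
Proof.
  unfold free; induction A; simpl; intros H; auto.
  - f_equal. induction args; simpl in *; auto.
    rewrite tsubst_notin, IHargs; auto; intro; apply H, in_or_app; auto.
  - rewrite !tsubst_notin; auto; intro; apply H, in_or_app; auto.
  - rewrite IHA1, IHA2; auto; intro; apply H, in_or_app; auto.
  - rewrite IHA1, IHA2; auto; intro; apply H, in_or_app; auto.
  - rewrite IHA1, IHA2; auto; intro; apply H, in_or_app; auto.
  - destruct (var_eqb x0 x) eqn:E; auto. rewrite IHA; auto.
    intro Hx; apply H. apply filter_In; split; auto.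
    rewrite var_eqb_neq; auto. intro; subst; rewrite var_eqb_refl in E; discriminate.
  - destruct (var_eqb x0 x) eqn:E; auto. rewrite IHA; auto.
    intro Hx; apply H. apply filter_In; split; auto.
    rewrite var_eqb_neq; auto. intro; subst; rewrite var_eqb_refl in E; discriminate.
Qed.

Lemma tev_tsubst rho x t v (u : fterm T) :
  (forall r, tev P rho t r <-> r = v) ->
  forall r, tev P rho (tsubst x t u) r <-> tev P (upd P rho x v) u r.
Proof.
  intros Ht; induction u; simpl; intros r.
  - unfold upd; destruct (var_eqb x0 x); simpl; auto. tauto.
  - tauto.
  - split; intros [i [Hi E]]; exists i; split; auto; apply IHu; auto.
  - split; intros [i [j [Hi [Hj E]]]]; exists i, j; repeat split; auto;
      first [apply IHu1 | apply IHu2]; auto.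
  - split; intros [i [j [Hi [Hj E]]]]; exists i, j; repeat split; auto;
      first [apply IHu1 | apply IHu2]; auto.
  - split; intros [i [j [Hi [Hj E]]]]; exists i, j; repeat split; auto;
      first [apply IHu1 | apply IHu2]; auto.
Qed.

Lemma Forall2_tsubst rho x t v args :
  (forall r, tev P rho t r <-> r = v) ->
  forall rs, Forall2 (tev P rho) (map (tsubst x t) args) rs <->
             Forall2 (tev P (upd P rho x v)) args rs.
Proof.
  intros Ht; induction args; simpl; intros rs; split; intros HF; inversion HF; subst;
    constructor; try (apply IHargs; auto); try (apply (tev_tsubst rho x t v); auto).
  all: apply (tev_tsubst rho x t v); auto.
Qed.

Lemma upd_comm rho x y a b : x <> y ->
  forall z, upd P (upd P rho x a) y b z = upd P (upd P rho y b) x a z.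
Proof.
  intros Hxy z; unfold upd.
  destruct (var_eqb z y) eqn:E1, (var_eqb z x) eqn:E2; auto.
  apply var_eqb_true in E1; apply var_eqb_true in E2; subst; tauto.
Qed.

Lemma hs_subst {Pr} (pi : bool -> Pr -> list T -> Prop) x t (A : form T Pr) :
  forall w rho v, (forall r, tev P rho t r <-> r = v) -> free_for x t A ->
  hs pi w rho (subst x t A) <-> hs pi w (upd P rho x v) A.
Proof.
  induction A; simpl; intros w rho v Ht Hff.
  - tauto.
  - split; intros [rs [H1 H2]]; exists rs; split; auto; apply (Forall2_tsubst rho x t v); auto.
  - split; intros [r [H1 H2]]; exists r; split; apply (tev_tsubst rho x t v); auto.
  - destruct Hff as [Hf1 Hf2]; rewrite (IHA1 w rho v Ht Hf1), (IHA2 w rho v Ht Hf2); tauto.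
  - destruct Hff as [Hf1 Hf2]; rewrite (IHA1 w rho v Ht Hf1), (IHA2 w rho v Ht Hf2); tauto.
  - destruct Hff as [Hf1 Hf2]; split; intros Hi w' Ha Hx.
    + apply (IHA2 w' rho v Ht Hf2); apply Hi; auto; apply (IHA1 w' rho v Ht Hf1); auto.
    + apply (IHA2 w' rho v Ht Hf2); apply Hi; auto; apply (IHA1 w' rho v Ht Hf1); auto.
  - destruct (var_eqb x0 x) eqn:E.
    + apply var_eqb_true in E; subst x0.
      change (hs pi w rho (FAll x A) <-> hs pi w (upd P rho x v) (FAll x A)).
      apply (hs_ext pi (FAll x A) w). intros y Hy. simpl in Hy.
      apply filter_In in Hy; destruct Hy as [_ Hy].
      rewrite upd_neq; auto. intro; subst; rewrite var_eqb_refl in Hy; discriminate.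
    + assert (Hne : x0 <> x) by (intro; subst; rewrite var_eqb_refl in E; discriminate).
      destruct Hff as [[Hnf | Hnin] Hff].
      * rewrite subst_notfree; auto. simpl.
        assert (K : forall r, hs pi w (upd P rho x0 r) A <-> hs pi w (upd P (upd P rho x v) x0 r) A).
        { intros r; apply hs_ext. intros y Hy. unfold upd.
          destruct (var_eqb y x0) eqn:E1; destruct (var_eqb y x) eqn:E2; auto.
          apply var_eqb_true in E2; subst; tauto. }
        destruct (fst x0); split; intros H r; apply K; apply H.
      * simpl.
        assert (K : forall r, hs pi w (upd P rho x0 r) (subst x t A) <-> hs pi w (upd P (upd P rho x v) x0 r) A).
        { intros r. rewrite IHA; auto.
          - apply hs_ext; intros y _; apply upd_comm; auto.
          - intros r'. rewrite (tev_ext _ rho); auto. intros y Hy; apply upd_neq; intro; subst; tauto. }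
        destruct (fst x0); split; intros H r; apply K; apply H.
  - destruct (var_eqb x0 x) eqn:E.
    + apply var_eqb_true in E; subst x0.
      change (hs pi w rho (FEx x A) <-> hs pi w (upd P rho x v) (FEx x A)).
      apply (hs_ext pi (FEx x A) w). intros y Hy. simpl in Hy.
      apply filter_In in Hy; destruct Hy as [_ Hy].
      rewrite upd_neq; auto. intro; subst; rewrite var_eqb_refl in Hy; discriminate.
    + assert (Hne : x0 <> x) by (intro; subst; rewrite var_eqb_refl in E; discriminate).
      destruct Hff as [[Hnf | Hnin] Hff].
      * rewrite subst_notfree; auto. simpl.
        assert (K : forall r, hs pi w (upd P rho x0 r) A <-> hs pi w (upd P (upd P rho x v) x0 r) A).
        { intros r; apply hs_ext. intros y Hy. unfold upd.
          destruct (var_eqb y x0) eqn:E1; destruct (var_eqb y x) eqn:E2; auto.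
          apply var_eqb_true in E2; subst; tauto. }
        destruct (fst x0); split; intros [r H]; exists r; apply K; auto.
      * simpl.
        assert (K : forall r, hs pi w (upd P rho x0 r) (subst x t A) <-> hs pi w (upd P (upd P rho x v) x0 r) A).
        { intros r. rewrite IHA; auto.
          - apply hs_ext; intros y _; apply upd_comm; auto.
          - intros r'. rewrite (tev_ext _ rho); auto. intros y Hy; apply upd_neq; intro; subst; tauto. }
        destruct (fst x0); split; intros [r H]; exists r; apply K; auto.
Qed.

End Sem.

Section Sound.
Variable P : PT.
Notation T := (pt P).
Notation hs := (hs P).
Notation acc := acc.

Fixpoint updl (rho : var -> T) (xs : list var) (vals : list T) : var -> T :=
  match xs, vals with
  | x :: xs', a :: vals' => updl (upd P rho x a) xs' vals'
  | _, _ => rho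
  end.

Lemma updl_notin rho xs vals y : ~ In y xs -> updl rho xs vals y = rho y.
Proof.
  revert rho vals; induction xs; intros rho vals H; destruct vals; simpl; auto.
  rewrite IHxs; [|intro; apply H; simpl; auto]. apply upd_neq. intro; subst; apply H; simpl; auto.
Qed.

Lemma updl_map_in rho rho' ys y : In y ys -> updl rho ys (map rho' ys) y = rho' y.
Proof.
  revert rho; induction ys; simpl; intros rho H; [tauto|].
  destruct (classic (In y ys)) as [Hi|Hn]; auto.
  destruct H as [->|H]; [|tauto]. rewrite updl_notin; auto. apply upd_eq.
Qed.

Lemma map_updl rho ys vals : NoDup ys -> length ys = length vals -> map (updl rho ys vals) ys = vals.
Proof.
  revert rho vals; induction ys; intros rho vals Hn Hl; destruct vals; simpl in *; try discriminate; auto.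
  inversion Hn; subst. f_equal.
  - rewrite updl_notin; auto. apply upd_eq.
  - apply IHys; auto.
Qed.

Lemma map_updl_notin rho ys vals zs : (forall z, In z zs -> ~ In z ys) ->
  map (updl rho ys vals) zs = map rho zs.
Proof.
  intros H; apply map_ext_in; intros z Hz; apply updl_notin; auto.
Qed.

Lemma NoDup_app_disj {A} (l1 l2 : list A) a : NoDup (l1 ++ l2) -> In a l1 -> In a l2 -> False.
Proof.
  induction l1; simpl; intros Hn H1 H2; auto.
  inversion Hn; subst. destruct H1 as [->|H1]; eauto.
  apply H3, in_or_app; auto.
Qed.

Lemma gv_in v X : In (SG, v) (gv X) <-> In v X.
Proof.
  unfold gv; rewrite in_map_iff; split; [intros [x [E H]]; inversion E; subst; auto|intros; exists v; auto].
Qed.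
Lemma gv_sort y X : In y (gv X) -> fst y = SG.
Proof. unfold gv; rewrite in_map_iff; intros [x [<- _]]; auto. Qed.
Lemma gv_NoDup X : NoDup X -> NoDup (gv X).
Proof.
  unfold gv; induction 1; simpl; constructor; auto.
  rewrite in_map_iff; intros [y [E Hy]]; inversion E; subst; auto.
Qed.
Lemma gv_length X : length (gv X) = length X.
Proof. unfold gv; apply length_map. Qed.
Lemma gv_app X Y : gv (X ++ Y) = gv X ++ gv Y.
Proof. unfold gv; apply map_app. Qed.

Lemma firstn_exact {A} (l1 l2 : list A) n : n = length l1 -> firstn n (l1 ++ l2) = l1.
Proof. intros ->; induction l1; simpl; auto; f_equal; auto. Qed.
Lemma skipn_exact {A} (l1 l2 : list A) n : n = length l1 -> skipn n (l1 ++ l2) = l2.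
Proof. intros ->; induction l1; simpl; auto. Qed.

Lemma Forall2_vts rho xs rs : Forall2 (tev P rho) (vts xs) rs <-> rs = map rho xs.
Proof.
  revert rs; induction xs; simpl; intros rs; split; intros H.
  - inversion H; auto.
  - subst; constructor.
  - inversion H; subst. simpl in H2. subst. f_equal. apply IHxs; auto.
  - subst; constructor; simpl; auto. apply IHxs; auto.
Qed.

Lemma Forall2_app_l {A B} (R : A -> B -> Prop) l1 l2 rs :
  Forall2 R (l1 ++ l2) rs <-> exists r1 r2, rs = r1 ++ r2 /\ Forall2 R l1 r1 /\ Forall2 R l2 r2.
Proof.
  split.
  - intros H; destruct (Forall2_app_inv_l _ _ H) as [r1 [r2 [H1 [H2 ->]]]]; exists r1, r2; auto.
  - intros [r1 [r2 [-> [H1 H2]]]]; apply Forall2_app; auto.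
Qed.

Section Gen.
Context {Pr : Type} (pi : bool -> Pr -> list T -> Prop).

Lemma hs_top w rho : hs pi w rho FTop.
Proof. simpl; auto. Qed.

Lemma hs_bigAnd w rho l : hs pi w rho (bigAnd l) <-> Forall (hs pi w rho) l.
Proof.
  induction l as [|a l IH]; simpl.
  - split; auto.
  - destruct l.
    + split; intros H; [constructor; auto | inversion H; auto].
    + change (hs pi w rho (FAnd a (bigAnd (f :: l))) <-> Forall (hs pi w rho) (a :: f :: l)).
      simpl hs at 1. rewrite IH. split; [intros [H1 H2]; constructor; auto|intros H; inversion H; auto].
Qed.

Lemma hs_bigOr w rho l : hs pi w rho (bigOr l) <-> Exists (hs pi w rho) l.
Proof.
  induction l as [|a l IH]; simpl.
  - split; [tauto|intros H; inversion H].
  - destruct l.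
    + split; intros H; [constructor; auto | inversion H; auto; inversion H1].
    + change (hs pi w rho (FOr a (bigOr (f :: l))) <-> Exists (hs pi w rho) (a :: f :: l)).
      simpl hs at 1. rewrite IH. split; [intros [H1|H2]; [apply Exists_cons_hd|apply Exists_cons_tl]; auto
        |intros H; inversion H; auto].
Qed.

Lemma hs_alls_gv w X A rho :
  hs pi w rho (alls (gv X) A) <-> forall vals, length vals = length X -> hs pi w (updl rho (gv X) vals) A.
Proof.
  revert rho; induction X as [|x X IH]; intros rho; simpl.
  - split; [intros H [|] Hl; simpl in *; auto; discriminate|intros H; apply (H []); auto].
  - split.
    + intros H [|v vals] Hl; simpl in Hl; [discriminate|]. simpl. apply IH; auto.
    + intros H r. apply IH. intros vals Hl. apply (H (r :: vals)); simpl; auto.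
Qed.

Lemma hs_exs_gv w X A rho :
  hs pi w rho (exs (gv X) A) <-> exists vals, length vals = length X /\ hs pi w (updl rho (gv X) vals) A.
Proof.
  revert rho; induction X as [|x X IH]; intros rho; simpl.
  - split; [intros H; exists []; auto|intros [[|] [Hl H]]; simpl in *; auto; discriminate].
  - split.
    + intros [r H]. apply IH in H. destruct H as [vals [Hl H]]. exists (r :: vals); simpl; auto.
    + intros [[|v vals] [Hl H]]; simpl in Hl; [discriminate|]. exists v. apply IH. exists vals; auto.
Qed.

Lemma alls_app (l1 l2 : list var) (A : form T Pr) : alls (l1 ++ l2) A = alls l1 (alls l2 A).
Proof. unfold alls; apply fold_right_app. Qed.
Lemma exs_app (l1 l2 : list var) (A : form T Pr) : exs (l1 ++ l2) A = exs l1 (exs l2 A).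
Proof. unfold exs; apply fold_right_app. Qed.

Lemma wsr_upd rho x r : wsr P rho -> (fst x = SI -> exists k, r = num P k) -> wsr P (upd P rho x r).
Proof.
  intros H Hx n. unfold upd. destruct (var_eqb (SI, n) x) eqn:E; auto.
  apply var_eqb_true in E; subst; apply Hx; auto.
Qed.

Lemma valid_alls (A : form T Pr) xs w :
  (forall rho, wsr P rho -> hs pi w rho A) -> forall rho, wsr P rho -> hs pi w rho (alls xs A).
Proof.
  induction xs as [|x xs IH]; simpl; intros H rho Hr; auto.
  destruct x as [[|] n]; simpl; intros r; apply IH; auto; apply wsr_upd; simpl; auto; try discriminate.
  intros _; eauto.
Qed.

Lemma hs_iff w rho (A B : form T Pr) :
  hs pi w rho (FIff A B) <-> forall w', acc w' w -> (hs pi w' rho A <-> hs pi w' rho B).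
Proof.
  simpl; split.
  - intros [H1 H2] w' Ha; split; auto.
  - intros H; split; intros w' Ha; apply H; auto.
Qed.

End Gen.

Lemma hs_emb (pi0 : bool -> pred0 -> list T -> Prop) (pi2 : bool -> pred2 T -> list T -> Prop)
  (Hp : forall w p rs, pi2 w (P0 p) rs <-> pi0 w p rs) (A : form T pred0) :
  forall w rho, hs pi2 w rho (emb A) <-> hs pi0 w rho A.
Proof.
  induction A; simpl; intros w rho; try tauto.
  - split; intros [rs [H1 H2]]; exists rs; split; auto; apply Hp; auto.
  - rewrite IHA1, IHA2; tauto.
  - rewrite IHA1, IHA2; tauto.
  - split; intros H w' Ha Hx.
    + apply IHA2; apply H; auto; apply IHA1; auto.
    + apply IHA2; apply H; auto; apply IHA1; auto.
  - destruct (fst x); split; intros H r; apply IHA; auto; apply H.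
  - destruct (fst x); split; intros [r H]; exists r; apply IHA; auto.
Qed.

Lemma int_term_val rho t : wsr P rho -> int_term P t -> exists k, tev P rho t (num P k).
Proof.
  intros Hw; induction t; simpl; intros H.
  - destruct x as [[|] n]; [tauto|]. destruct (Hw n) as [k Hk]; exists k; simpl; auto.
  - destruct H as [n ->]; exists n; auto.
  - destruct (IHt H) as [k Hk]; exists (Z.abs k); exists k; auto.
  - destruct H as [H1 H2]; destruct (IHt1 H1) as [i Hi]; destruct (IHt2 H2) as [j Hj];
      exists (i + j)%Z, i, j; auto.
  - destruct H as [H1 H2]; destruct (IHt1 H1) as [i Hi]; destruct (IHt2 H2) as [j Hj];
      exists (i - j)%Z, i, j; auto.
  - destruct H as [H1 H2]; destruct (IHt1 H1) as [i Hi]; destruct (IHt2 H2) as [j Hj];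
      exists (i * j)%Z, i, j; auto.
Qed.

Lemma sort_ok_val rho x t : wsr P rho -> sort_ok P x t ->
  exists v, tev P rho t v /\ (fst x = SI -> exists k, v = num P k).
Proof.
  intros Hw; unfold sort_ok; destruct (fst x); intros H.
  - destruct t; simpl in *.
    + exists (rho x0); split; auto; discriminate.
    + exists c; split; auto; discriminate.
    + destruct (int_term_val rho t Hw H) as [k Hk]. exists (num P (Z.abs k)); split; [exists k; auto|discriminate].
    + destruct H as [H1 H2]; destruct (int_term_val _ _ Hw H1) as [i Hi]; destruct (int_term_val _ _ Hw H2) as [j Hj].
      exists (num P (i + j)); split; [exists i, j; auto|discriminate].
    + destruct H as [H1 H2]; destruct (int_term_val _ _ Hw H1) as [i Hi]; destruct (int_term_val _ _ Hw H2) as [j Hj].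
      exists (num P (i - j)); split; [exists i, j; auto|discriminate].
    + destruct H as [H1 H2]; destruct (int_term_val _ _ Hw H1) as [i Hi]; destruct (int_term_val _ _ Hw H2) as [j Hj].
      exists (num P (i * j)); split; [exists i, j; auto|discriminate].
  - destruct (int_term_val rho t Hw H) as [k Hk]; exists (num P k); split; eauto.
Qed.

Lemma tev_unique rho t v : tev P rho t v -> forall r, tev P rho t r <-> r = v.
Proof. intros H r; split; [intros H'; eapply tev_det; eauto|intros ->; auto]. Qed.

Lemma free_for_closed {Pr} x (t : fterm T) (A : form T Pr) :
  (forall y, In y (ftvars t) -> y = x) -> free_for x t A.
Proof.
  intros Ht; induction A; simpl; auto.
  destruct (var_eqb x0 x) eqn:E; auto. split; auto. right; intro Hy.
  apply Ht in Hy; subst; rewrite var_eqb_refl in E; discriminate.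
  destruct (var_eqb x0 x) eqn:E; auto. split; auto. right; intro Hy.
  apply Ht in Hy; subst; rewrite var_eqb_refl in E; discriminate.
Qed.

End Sound.

Section Interp.
Variable P : PT.
Notation T := (pt P).
Notation hs := (hs P).
Notation updl := (updl P).
Variables (H Tm : patom P -> Prop).
Hypothesis HTsub : forall a, H a -> Tm a.

Definition pi0 (w : bool) (p : pred0) (rs : list T) : Prop :=
  match p with
  | PSym q _ => (if w then H else Tm) (q, rs)
  | _ => pinterp P p rs
  end.

Definition rho0 : var -> T := fun _ => num P 0.

Definition Fsem w X V F (xs vs : list T) : Prop :=
  hs pi0 w (updl (updl rho0 (gv X) xs) (gv V) vs) F.

Fixpoint lexs (a b : list T) : Prop :=
  match a, b with
  | x :: a', y :: b' => ptlt P x y \/ (x = y /\ lexs a' b')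
  | _, _ => False
  end.

Fixpoint startn w X V F (vs : list T) (n : nat) (xs : list T) {struct n} : Prop :=
  match n with
  | O => True
  | S m => Fsem w X V F xs vs /\
           match m with
           | O => True
           | S _ => exists us, length us = length X /\ lexs xs us /\ startn w X V F vs m us
           end
  end.

Definition dflt : T := num P 0.

Definition pi2 (w : bool) (p : pred2 T) (rs : list T) : Prop :=
  match p with
  | P0 q => pi0 w q rs
  | PStart X V F => exists k, last rs dflt = num P k /\
      startn w X V F (firstn (length V) (skipn (length X) rs)) (Z.to_nat k) (firstn (length X) rs)
  | PAtleast X V F => exists xs k, length xs = length X /\
      startn w X V F (firstn (length V) rs) (Z.to_nat k) xs /\
      (ptlt P (last rs dflt) (num P k) \/ num P k = last rs dflt)
  | PAtmost X V F => forall w', acc w' w -> forall xs k, length xs = length X ->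
      startn w' X V F (firstn (length V) rs) (Z.to_nat k) xs ->
      (ptlt P (num P k) (last rs dflt) \/ num P k = last rs dflt)
  end.

Lemma pi0_persist p rs : pi0 true p rs -> pi0 false p rs.
Proof. destruct p; simpl; auto. Qed.

Lemma Fsem_persist X V F xs vs : Fsem true X V F xs vs -> Fsem false X V F xs vs.
Proof. unfold Fsem; intros; eapply hs_persist; eauto. apply pi0_persist. apply acc_false. Qed.

Lemma startn_persist X V F vs n : forall xs, startn true X V F vs n xs -> startn false X V F vs n xs.
Proof.
  induction n as [|n IH]; intros xs Hs; [simpl; auto|].
  destruct n as [|m].
  - destruct Hs; split; auto; apply Fsem_persist; auto.
  - destruct Hs as [H1 [us [H2 [H3 H4]]]]; split; [apply Fsem_persist; auto|].
    exists us; split; [auto|split; [auto|apply IH; auto]].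
Qed.

Lemma pi2_persist p rs : pi2 true p rs -> pi2 false p rs.
Proof.
  destruct p; simpl; auto.
  - apply pi0_persist.
  - intros [xs [k [H1 [H2 H3]]]]; exists xs, k; repeat split; auto; apply startn_persist; auto.
  - intros Hq w' Ha; apply Hq. right; destruct Ha; auto.
  - intros [k [H1 H2]]; exists k; split; auto; apply startn_persist; auto.
Qed.

Lemma hs2_emb w rho (A : form T pred0) : hs pi2 w rho (emb A) <-> hs pi0 w rho A.
Proof. apply hs_emb. intros; simpl; tauto. Qed.

Lemma num_le a b : (ptlt P (num P a) (num P b) \/ num P a = num P b) <-> (a <= b)%Z.
Proof.
  rewrite num_lt. split.
  - intros [H1|H1]; [lia|apply num_inj in H1; lia].
  - intros Hab. destruct (Z.eq_dec a b); [right; subst; auto|left; lia].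
Qed.

Lemma Forall2_single {A B} (R : A -> B -> Prop) a rs : Forall2 R [a] rs <-> exists r, rs = [r] /\ R a r.
Proof.
  split; [intros HF; inversion HF as [|x y l l' Hxy Hr]; subst; inversion Hr; subst; eauto
         |intros [r [-> Hr]]; constructor; auto].
Qed.

Lemma hs_cmp2 {Pr} (pi : bool -> Pr -> list T -> Prop) (pr : Pr) w rho a b :
  hs pi w rho (FPred pr [a; b]) <-> exists ra rb, tev P rho a ra /\ tev P rho b rb /\ pi w pr [ra; rb].
Proof.
  simpl; split.
  - intros [rs [HF Hp]]. inversion HF as [|x y l l' Hxy Hr]; subst.
    inversion Hr as [|x' y' l2 l2' Hxy' Hr']; subst. inversion Hr'; subst. eauto.
  - intros [ra [rb [H1 [H2 H3]]]]; exists [ra; rb]; split; auto.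
Qed.

Lemma hs_start w rho X V F xs t : length xs = length X ->
  hs pi2 w rho (start_atom P X V F xs t) <->
  exists k, tev P rho t (num P k) /\
            startn w X V F (map rho (gv V)) (Z.to_nat k) (map rho (gv xs)).
Proof.
  intros Hl; unfold start_atom; simpl.
  assert (L1 : length (map rho (gv xs)) = length X) by (rewrite length_map, gv_length; auto).
  assert (L2 : length (map rho (gv V)) = length V) by (rewrite length_map, gv_length; auto).
  split.
  - intros [rs [HF Hp]].
    apply Forall2_app_l in HF; destruct HF as [r1 [r2 [-> [H1 H2]]]].
    apply Forall2_app_l in H2; destruct H2 as [r3 [r4 [-> [H3 H4]]]].
    apply Forall2_vts in H1; apply Forall2_vts in H3; subst.
    apply Forall2_single in H4; destruct H4 as [r [-> Hr]].
    destruct Hp as [k [Hk Hs]]. rewrite app_assoc, last_last in Hk. subst r.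
    rewrite (firstn_exact _ _ _ (eq_sym L1)) in Hs.
    rewrite (skipn_exact _ _ _ (eq_sym L1)), (firstn_exact _ _ _ (eq_sym L2)) in Hs.
    exists k; auto.
  - intros [k [Hk Hs]]. exists (map rho (gv xs) ++ map rho (gv V) ++ [num P k]). split.
    + apply Forall2_app; [apply Forall2_vts; auto|]. apply Forall2_app; [apply Forall2_vts; auto|].
      constructor; auto.
    + exists k. split; [rewrite app_assoc, last_last; auto|].
      rewrite (firstn_exact _ _ _ (eq_sym L1)).
      rewrite (skipn_exact _ _ _ (eq_sym L1)), (firstn_exact _ _ _ (eq_sym L2)). auto.
Qed.

Lemma Fsem_rho w X V F rho : sig_ok P X V F ->
  Fsem w X V F (map rho (gv X)) (map rho (gv V)) <-> hs pi0 w rho F.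
Proof.
  intros [Hnd [_ Hfv]]. unfold Fsem. apply hs_ext. intros y Hy.
  apply Hfv in Hy. rewrite gv_app in Hy. apply in_app_or in Hy.
  destruct (classic (In y (gv V))) as [HV|HV].
  - apply updl_map_in; auto.
  - rewrite updl_notin; auto. destruct Hy as [Hy|Hy]; [|tauto]. apply updl_map_in; auto.
Qed.

Lemma hs_and {Pr} (pi : bool -> Pr -> list T -> Prop) w rho A B :
  hs pi w rho (FAnd A B) <-> hs pi w rho A /\ hs pi w rho B.
Proof. reflexivity. Qed.

Lemma hs_lexlt_gen w rho xs : forall us eqs,
  Exists (hs pi2 w rho) (lex_disj P xs us eqs) <->
  hs pi2 w rho (bigAnd eqs) /\ lexs (map rho (gv xs)) (map rho (gv us)).
Proof.
  induction xs as [|x xs IH]; intros us eqs.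
  - simpl. split; [intros Hx; inversion Hx|intros [_ []]].
  - destruct us as [|u us].
    + simpl. split; [intros Hx; inversion Hx|intros [_ []]].
    + cbn [lex_disj]. rewrite Exists_cons, IH, hs_and.
      rewrite !hs_bigAnd, Forall_app. unfold cmp2. rewrite hs_cmp2. cbn [map gv lexs].
      split.
      * intros [[[ra [rb [H1 [H2 H3]]]] H4] | [[H4 H5] H6]].
        -- simpl in H1, H2, H3; subst. split; auto.
        -- split; auto. inversion H5 as [|a l Hq]; subst. destruct Hq as [r [E1 E2]].
           simpl in E1, E2; subst. right; split; auto.
      * intros [H4 [Hl|[He Hl]]].
        -- left; split; [|auto]. exists (rho (SG, x)), (rho (SG, u)); simpl; auto.
        -- right; split; auto. split; auto. constructor; auto. exists (rho (SG, x)); simpl; auto.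
Qed.

Lemma hs_lexlt w rho xs us :
  hs pi2 w rho (lexlt P xs us) <-> lexs (map rho (gv xs)) (map rho (gv us)).
Proof.
  unfold lexlt; rewrite hs_bigOr, hs_lexlt_gen. simpl. split; [tauto|]. intros; split; auto.
Qed.

Lemma wsr_updl rho xs vals : wsr P rho -> (forall x, In x xs -> fst x = SG) -> wsr P (updl rho xs vals).
Proof.
  revert rho vals; induction xs; intros rho vals Hw Hs; destruct vals; simpl; auto.
  apply IHxs; [|intros; apply Hs; simpl; auto].
  apply wsr_upd; auto. rewrite (Hs a); [discriminate|simpl; auto].
Qed.

Lemma gv_notSI n X : ~ In (SI, n) (gv X).
Proof. intro Hi; apply gv_sort in Hi; discriminate. Qed.

Lemma D0_sound A : D0 P A -> forall w rho, wsr P rho -> hs pi2 w rho A.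
Proof.
  intros [X [V [F [U [n [Hsig [HU [HUl [HUd Hor]]]]]]]]].
  pose proof Hsig as [Hnd [_ _]].
  destruct Hor as [->|[->| ->]]; intros w; apply valid_alls; intros rho Hr.
  - intros w' Ha Hle. apply hs_start; auto.
    destruct (Hr n) as [m Hm]. unfold cmp2, ncst in Hle. rewrite hs_cmp2 in Hle.
    destruct Hle as [ra [rb [H1 [H2 H3]]]]. simpl in H1, H2, H3. subst.
    rewrite Hm in H3. apply num_le in H3.
    exists m. split; [simpl; auto|]. replace (Z.to_nat m) with 0%nat by lia. simpl; auto.
  - rewrite hs_iff. intros w' Ha. rewrite hs_start, hs2_emb; auto.
    rewrite <- (Fsem_rho w' X V F rho Hsig). split.
    + intros [k [Hk Hs]]. simpl in Hk. apply num_inj in Hk; subst. simpl in Hs. tauto.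
    + intros Hf. exists 1%Z. split; [simpl; auto|]. simpl; auto.
  - intros w' Ha Hgt. destruct (Hr n) as [m Hm].
    unfold cmp2, ncst in Hgt. rewrite hs_cmp2 in Hgt.
    destruct Hgt as [ra [rb [H1 [H2 H3]]]]. simpl in H1, H2, H3. subst.
    rewrite Hm in H3. apply num_lt in H3.
    rewrite hs_iff. intros w'' Ha'. rewrite hs_start; auto. rewrite hs_and.
    rewrite hs2_emb, hs_exs_gv, <- (Fsem_rho w'' X V F rho Hsig).
    assert (Ek : forall k, tev P rho (FAdd (FVar (SI, n)) (FCst (num P 1))) (num P k) <-> k = (m + 1)%Z).
    { intros k; simpl. split.
      - intros [i [j [Hi [Hj E]]]]. rewrite Hm in Hi. apply num_inj in Hi, E. subst. apply num_inj in Hj; lia.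
      - intros ->. exists m, 1%Z. auto. }
    destruct (Z.to_nat m) as [|j] eqn:Ej; [lia|].
    assert (Ej1 : Z.to_nat (m + 1) = S (S j)) by lia.
    split.
    + intros [k [Hk Hs]]. apply Ek in Hk; subst. rewrite Ej1 in Hs. simpl in Hs.
      destruct Hs as [Hf [us [Hl [Hlx Hs]]]]. split; auto.
      exists us. split; [lia|]. split.
      * apply hs_lexlt. rewrite map_updl_notin.
        -- rewrite map_updl; auto. apply gv_NoDup; auto. rewrite gv_length; lia.
        -- intros z Hz1 Hz2. apply gv_sort in Hz1 as Hs1. destruct z as [s0 z]; simpl in Hs1; subst.
           apply gv_in in Hz1, Hz2. apply (HUd z); auto. apply in_or_app; auto.
      * apply hs_start; auto. exists m. split.
        -- simpl. rewrite updl_notin; auto. apply gv_notSI.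
        -- rewrite Ej. rewrite map_updl; [|apply gv_NoDup; auto|rewrite gv_length; lia].
           rewrite map_updl_notin; auto.
           intros z Hz1 Hz2. apply gv_sort in Hz1 as Hs1. destruct z as [s0 z]; simpl in Hs1; subst.
           apply gv_in in Hz1, Hz2. apply (HUd z); auto. apply in_or_app; auto.
    + intros [Hf [us [Hl Hq]]]. destruct Hq as [Hlx Hs].
      rewrite hs_lexlt in Hlx. rewrite hs_start in Hs; auto.
      destruct Hs as [k [Hk Hs]]. simpl in Hk. rewrite updl_notin in Hk; [|apply gv_notSI].
      rewrite Hm in Hk. apply num_inj in Hk; subst k.
      rewrite map_updl in Hlx, Hs; [| apply gv_NoDup; auto | rewrite gv_length; lia
        | apply gv_NoDup; auto | rewrite gv_length; lia].
      assert (E1 : forall Y, (forall z, In z Y -> In z (X ++ V)) ->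
                  map (updl rho (gv U) us) (gv Y) = map rho (gv Y)).
      { intros Y HY. apply map_updl_notin. intros z Hz1 Hz2. apply gv_sort in Hz1 as Hs1.
        destruct z as [s0 z]; simpl in Hs1; subst. apply gv_in in Hz1, Hz2. apply (HUd z); auto. }
      rewrite E1 in Hlx, Hs; try (intros; apply in_or_app; auto).
      exists (m + 1)%Z. split; [apply Ek; auto|]. rewrite Ej1. simpl. split; auto.
      exists us. rewrite Ej in Hs. split; [lia|]. auto.
Qed.

Lemma hs_exSI {Pr} (pi : bool -> Pr -> list T -> Prop) w rho n (A : form T Pr) :
  hs pi w rho (exs [(SI, n)] A) <-> exists k, hs pi w (upd P rho (SI, n) (num P k)) A.
Proof. reflexivity. Qed.
Lemma hs_allSI {Pr} (pi : bool -> Pr -> list T -> Prop) w rho n (A : form T Pr) :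
  hs pi w rho (alls [(SI, n)] A) <-> forall k, hs pi w (upd P rho (SI, n) (num P k)) A.
Proof. reflexivity. Qed.

Lemma map_upd_gv rho n v X : map (upd P rho (SI, n) v) (gv X) = map rho (gv X).
Proof. apply map_ext_in; intros z Hz; apply upd_neq; intro; subst; apply gv_sort in Hz; discriminate. Qed.

Lemma D1_sound A : D1 P A -> forall w rho, wsr P rho -> hs pi2 w rho A.
Proof.
  intros [X [V [F [y [n [Hsig [Hy Hor]]]]]]].
  pose proof Hsig as [Hnd [_ _]].
  assert (HXV : forall z, In z (gv X) -> ~ In z (gv V)).
  { intros z Hz1 Hz2. apply gv_sort in Hz1 as Hs1. destruct z as [s0 z]; simpl in Hs1; subst.
    apply gv_in in Hz1, Hz2. eapply NoDup_app_disj; eauto. }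
  assert (HYX : ~ In (SG, y) (gv X)) by (rewrite gv_in; intro; apply Hy, in_or_app; auto).
  assert (LV : forall rho : var -> T, length (map rho (gv V)) = length V) by (intros; rewrite length_map, gv_length; auto).
  destruct Hor as [->| ->]; intros w; apply valid_alls; intros rho Hr;
    rewrite hs_iff; intros w' Ha; simpl hs at 1.
  - rewrite exs_app, hs_exs_gv. split.
    + intros [rs [HF Hp]]. apply Forall2_app_l in HF; destruct HF as [r1 [r2 [-> [H1 H2]]]].
      apply Forall2_vts in H1; subst. apply Forall2_single in H2; destruct H2 as [r [-> Hr2]].
      simpl in Hr2; subst r.
      destruct Hp as [xs [k [Hl [Hs Hc]]]]. rewrite last_last in Hc.
      rewrite (firstn_exact _ _ _ (eq_sym (LV rho))) in Hs.
      exists xs. split; [auto|]. rewrite hs_exSI. exists k.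
      rewrite hs_and, hs_start; auto. split.
      * exists k. split; [simpl; rewrite upd_eq; auto|].
        rewrite !map_upd_gv.
        rewrite map_updl; [|apply gv_NoDup; eapply NoDup_app_remove_r; eauto|rewrite gv_length; auto].
        rewrite map_updl_notin; auto. intros z Hz1 Hz2; eapply HXV; eauto.
      * unfold cmp2, ncst. rewrite hs_cmp2. exists (num P k), (rho (SG, y)). simpl. repeat split.
        all: try (rewrite upd_neq; [|discriminate]; rewrite updl_notin; auto).
        all: try tauto. all: try (rewrite upd_eq; auto).
    + intros [xs [Hl Hq]]. rewrite hs_exSI in Hq. destruct Hq as [k Hq]. rewrite hs_and, hs_start in Hq; auto.
      destruct Hq as [[k' [Hk Hs]] Hc]. simpl in Hk. rewrite upd_eq in Hk. apply num_inj in Hk; subst k'.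
      rewrite !map_upd_gv in Hs.
      rewrite map_updl in Hs; [|apply gv_NoDup; eapply NoDup_app_remove_r; eauto|rewrite gv_length; auto].
      rewrite map_updl_notin in Hs; [|intros z Hz1 Hz2; eapply HXV; eauto].
      unfold cmp2, ncst in Hc. rewrite hs_cmp2 in Hc. destruct Hc as [ra [rb [H1 [H2 H3]]]].
      simpl in H1, H2, H3. rewrite upd_eq in H1. rewrite upd_neq in H2; [|discriminate].
      rewrite updl_notin in H2; auto. subst.
      exists (map rho (gv V) ++ [rho (SG, y)]). split.
      * apply Forall2_app; [apply Forall2_vts; auto|]. constructor; simpl; auto.
      * exists xs, k. split; auto.
        rewrite (firstn_exact _ _ _ (eq_sym (LV rho))), last_last. split; auto; try tauto.
  - rewrite alls_app, hs_alls_gv. split.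
    + intros [rs [HF Hp]]. apply Forall2_app_l in HF; destruct HF as [r1 [r2 [-> [H1 H2]]]].
      apply Forall2_vts in H1; subst. apply Forall2_single in H2; destruct H2 as [r [-> Hr2]].
      simpl in Hr2; subst r. simpl in Hp.
      rewrite (firstn_exact _ _ _ (eq_sym (LV rho))), last_last in Hp.
      intros xs Hl. rewrite hs_allSI. intros k w'' Ha' Hst.
      rewrite hs_start in Hst; [|auto].
      destruct Hst as [k' [Hk Hs]]. simpl in Hk. rewrite upd_eq in Hk. apply num_inj in Hk; subst k'.
      rewrite !map_upd_gv in Hs.
      rewrite map_updl in Hs; [|apply gv_NoDup; eapply NoDup_app_remove_r; eauto|rewrite gv_length; auto].
      rewrite map_updl_notin in Hs; [|intros z Hz1 Hz2; eapply HXV; eauto].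
      unfold cmp2, ncst. rewrite hs_cmp2. exists (num P k), (rho (SG, y)). simpl. repeat split.
      all: try (rewrite upd_eq; auto).
      all: try (rewrite upd_neq; [|discriminate]; rewrite updl_notin; auto).
      * apply (Hp w'' Ha' xs); auto.
    + intros Hq. exists (map rho (gv V) ++ [rho (SG, y)]). split.
      * apply Forall2_app; [apply Forall2_vts; auto|]. constructor; simpl; auto.
      * simpl. rewrite (firstn_exact _ _ _ (eq_sym (LV rho))), last_last.
        intros w'' Ha' xs k Hl Hs.
        assert (Hq' := Hq xs Hl). rewrite hs_allSI in Hq'.
        specialize (Hq' k w'' Ha').
        assert (Hst : hs pi2 w'' (upd P (updl rho (gv X) xs) (SI, n) (num P k))
                         (start_atom P X V F X (FVar (SI, n)))).
        { apply hs_start; auto. exists k. split; [simpl; rewrite upd_eq; auto|].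
          rewrite !map_upd_gv.
          rewrite map_updl; [|apply gv_NoDup; eapply NoDup_app_remove_r; eauto|rewrite gv_length; auto].
          rewrite map_updl_notin; auto. intros z Hz1 Hz2; eapply HXV; eauto. }
        specialize (Hq' Hst). unfold cmp2, ncst in Hq'. apply (proj1 (hs_cmp2 pi2 (P0 PLe) _ _ _ _)) in Hq'.
        destruct Hq' as [ra [rb [H1 [H2 H3]]]].
        simpl in H1, H2, H3. rewrite upd_eq in H1. rewrite upd_neq in H2; [|discriminate].
        rewrite updl_notin in H2; auto. subst. auto.
Qed.

End Interp.

Section Snd.
Variable P : PT.
Notation T := (pt P).
Notation hs := (hs P).
Variables (H Tm : patom P -> Prop).
Hypothesis HTsub : forall a, H a -> Tm a.
Notation pi0 := (pi0 P H Tm).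
Notation pi2 := (pi2 P H Tm).

Definition dom (x : var) (r : T) : Prop := fst x = SI -> exists n, r = num P n.

Lemma hs_all {Pr} (pi : bool -> Pr -> list T -> Prop) w rho x (A : form T Pr) :
  hs pi w rho (FAll x A) <-> forall r, dom x r -> hs pi w (upd P rho x r) A.
Proof.
  unfold dom; simpl; destruct (fst x); split; intros Hq.
  - intros r _; auto.
  - intros r; apply Hq; discriminate.
  - intros r [n ->]; auto.
  - intros n; apply Hq; eauto.
Qed.

Lemma hs_ex {Pr} (pi : bool -> Pr -> list T -> Prop) w rho x (A : form T Pr) :
  hs pi w rho (FEx x A) <-> exists r, dom x r /\ hs pi w (upd P rho x r) A.
Proof.
  unfold dom; simpl; destruct (fst x); split.
  - intros [r Hr]; exists r; split; auto; discriminate.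
  - intros [r [_ Hr]]; eauto.
  - intros [n Hr]; exists (num P n); split; eauto.
  - intros [r [Hd Hr]]; destruct (Hd eq_refl) as [n ->]; eauto.
Qed.

Lemma dom_ex x : exists r, dom x r.
Proof. exists (num P 0); intros _; eauto. Qed.

Lemma wsr_upd_dom rho x r : wsr P rho -> dom x r -> wsr P (upd P rho x r).
Proof. intros; apply wsr_upd; auto. Qed.

Lemma upd_upd_hs {Pr} (pi : bool -> Pr -> list T -> Prop) w rho x a b (A : form T Pr) :
  hs pi w (upd P (upd P rho x a) x b) A <-> hs pi w (upd P rho x b) A.
Proof. apply hs_ext; intros y _; unfold upd; destruct (var_eqb y x); auto. Qed.

Lemma pi2p : forall p rs, pi2 true p rs -> pi2 false p rs.
Proof. apply pi2_persist; auto. Qed.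

Lemma persist2 w w' rho A : acc w' w -> hs pi2 w rho A -> hs pi2 w' rho A.
Proof. intros; eapply hs_persist; eauto. apply pi2p. Qed.

Lemma acc_false_inv w' : acc w' false -> w' = false.
Proof. intros [|]; auto. Qed.

Lemma hs_ssat B : no_psym B -> forall w rho, hs pi0 w rho B <-> ssat P rho B.
Proof.
  induction B; simpl; intros Hn w rho; try tauto.
  - destruct p; try tauto; simpl; split; intros [rs [H1 H2]]; exists rs; auto.
  - destruct Hn; rewrite IHB1, IHB2; tauto.
  - destruct Hn; rewrite IHB1, IHB2; tauto.
  - destruct Hn as [Hn1 Hn2]; split.
    + intros Hi Ha. apply (IHB2 Hn2 w), (Hi w (acc_refl w)), (IHB1 Hn1 w); auto.
    + intros Hi w' _ Ha. apply (IHB2 Hn2 w'), Hi, (IHB1 Hn1 w'); auto.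
  - destruct (fst x); split; intros Hq r; apply (IHB Hn w); apply Hq.
  - destruct (fst x); split; intros [r Hq]; exists r; apply (IHB Hn w); apply Hq.
Qed.

Lemma ax_sound A : HT_axioms P A -> forall w rho, wsr P rho -> hs pi2 w rho A.
Proof.
  intros [Ha|[Ha|[Ha|[Ha|[Ha|Ha]]]]].
  - destruct Ha as [F [G [_ [_ ->]]]]. intros w rho _. simpl hs.
    destruct w.
    + destruct (classic (hs pi2 true rho F)) as [HF|HF]; [left; auto|right].
      destruct (classic (hs pi2 false rho G)) as [HG|HG].
      * left. intros w' [->| ->] HF'; [contradiction|auto].
      * right. intros w' [->| ->] HG'; [apply HG; eapply persist2; eauto; apply acc_false|auto].
    + destruct (classic (hs pi2 false rho F)) as [HF|HF]; [left; auto|right; left].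
      intros w' Ha HF'. apply acc_false_inv in Ha; subst; contradiction.
  - destruct Ha as [x [F [_ ->]]]. intros w rho _. rewrite hs_ex.
    destruct (classic (exists r, dom x r /\ ~ hs pi2 false (upd P rho x r) F)) as [[r [Hd Hr]]|Hn].
    + exists r; split; auto. intros w' Ha HF. exfalso; apply Hr; eapply persist2; eauto; apply acc_false.
    + assert (Hall : forall r, dom x r -> hs pi2 false (upd P rho x r) F).
      { intros r Hd; apply NNPP; intro; apply Hn; eauto. }
      destruct w.
      * destruct (classic (exists r, dom x r /\ ~ hs pi2 true (upd P rho x r) F)) as [[r [Hd Hr]]|Hn'].
        -- exists r; split; auto. intros w' [->| ->] HF; [contradiction|].
           apply hs_all; intros r' Hd'; apply upd_upd_hs; auto.
        -- destruct (dom_ex x) as [r Hd]. exists r; split; auto.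
           intros w' [->| ->] HF; apply hs_all; intros r' Hd'; apply upd_upd_hs; auto.
           apply NNPP; intro; apply Hn'; eauto.
      * destruct (dom_ex x) as [r Hd]. exists r; split; auto.
        intros w' Ha HF. apply acc_false_inv in Ha; subst.
        apply hs_all; intros r' Hd'; apply upd_upd_hs; auto.
  - destruct Ha as [B [-> [_ [_ [Hn Hs]]]]]. intros w rho _.
    rewrite hs2_emb, hs_ssat; auto.
  - destruct Ha as [F [n [_ ->]]]. unfold closure. intros w. apply valid_alls.
    intros rho Hr w' Ha [H0 Hst].
    apply hs_all. intros r Hd w'' Ha' Hge.
    destruct (Hd eq_refl) as [m ->].
    unfold cmp2, ncst in Hge. rewrite hs_cmp2 in Hge.
    destruct Hge as [ra [rb [H1 [H2 H3]]]]. simpl in H1, H2, H3. rewrite upd_eq in H1. subst.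
    assert (Hm : (0 <= m)%Z).
    { destruct H3 as [H3|H3]; [apply num_lt in H3; lia|apply num_inj in H3; lia]. }
    apply (persist2 _ w'') in H0; [|auto]. apply (persist2 _ w'') in Hst; [|auto].
    assert (Claim : forall k : nat, hs pi2 w'' (upd P rho (SI, n) (num P (Z.of_nat k))) F).
    { induction k.
      - apply (hs_subst P pi2 (SI, n) (ncst P 0) F w'' rho); auto.
        + intros r; simpl; tauto.
        + apply free_for_closed; simpl; tauto.
      - rewrite hs_all in Hst. specialize (Hst (num P (Z.of_nat k)) ltac:(intros _; eauto) w'' (acc_refl _)).
        assert (Hk : hs pi2 w'' (upd P rho (SI, n) (num P (Z.of_nat k)))
                        (FAnd (cmp2 P PGe (FVar (SI, n)) (ncst P 0)) F)).
        { split; auto. unfold cmp2, ncst; rewrite hs_cmp2.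
          exists (num P (Z.of_nat k)), (num P 0). simpl. rewrite upd_eq. repeat split; auto.
          destruct (Z.eq_dec (Z.of_nat k) 0) as [E|E]; [right; rewrite E; auto|left; apply num_lt; lia]. }
        specialize (Hst Hk).
        rewrite (hs_subst P pi2 (SI, n) _ F w'' _ (num P (Z.of_nat (S k)))) in Hst.
        + apply upd_upd_hs in Hst; auto.
        + intros r. simpl. rewrite upd_eq. split.
          * intros [i [j [Hi [Hj ->]]]]. apply num_inj in Hi, Hj. subst. f_equal. lia.
          * intros ->. exists (Z.of_nat k), 1%Z. repeat split; auto. f_equal; lia.
        + apply free_for_closed; simpl. intros y [<-|[]]; auto. }
    replace m with (Z.of_nat (Z.to_nat m)) by lia. apply Claim.
  - intros w rho Hr. apply D0_sound; auto.
  - intros w rho Hr. apply D1_sound; auto.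
Qed.

Lemma sort_dom_val rho x t : wsr P rho -> sort_ok P x t -> exists v, tev P rho t v /\ dom x v.
Proof. intros Hr Hs. destruct (sort_ok_val P rho x t Hr Hs) as [v [Hv Hd]]. exists v; split; auto. Qed.

Theorem soundness A : Prov P (HT_axioms P) A -> forall w rho, wsr P rho -> hs pi2 w rho A.
Proof.
  induction 1 as [A1 wa ha|A1 B1 wa wb|A1 B1 C1 wa wb wc|A1 B1 wa wb|A1 B1 wa wb|A1 B1 wa wb
    |A1 B1 wa wb|A1 B1 wa wb|A1 B1 C1 wa wb wc|A1 wa|x A1 t wa so ff|x A1 t wa so ff|t wt
    |x A1 s t wa so1 so2 ff1 ff2|A1 B1 p1 IH1 p2 IH2|x A1 B1 p IH nf|x A1 B1 p IH nf];
    intros w rho Hr.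
  - apply ax_sound; auto.
  - intros w' Ha HA w'' Ha' HB. eapply persist2; eauto.
  - intros w1 _ K1 w2 Ha2 K2 w3 Ha3 K3.
    apply (K1 w3 (acc_trans _ _ _ Ha3 Ha2) K3 w3 (acc_refl _)). apply K2; auto.
  - intros w' _ [HA _]; auto.
  - intros w' _ [_ HB]; auto.
  - intros w' _ HA w'' Ha' HB; split; auto; eapply persist2; eauto.
  - intros w' _ HA; left; auto.
  - intros w' _ HB; right; auto.
  - intros w1 _ HAC w2 Ha2 HBC w3 Ha3 [HA|HB].
    + apply (HAC w3 (acc_trans _ _ _ Ha3 Ha2) HA).
    + apply (HBC w3 Ha3 HB).
  - intros w' _ [].
  - intros w' _ HA. destruct (sort_dom_val rho x t Hr so) as [v [Hv Hd]].
    apply (hs_subst P pi2 x t A1 w' rho v); auto. apply tev_unique; auto.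
    rewrite hs_all in HA; auto.
  - intros w' _ HA. destruct (sort_dom_val rho x t Hr so) as [v [Hv Hd]].
    apply (hs_subst P pi2 x t A1 w' rho v) in HA; auto; [|apply tev_unique; auto].
    apply hs_ex; eauto.
  - simpl. destruct (sort_ok_val P rho (SG, 0) t Hr wt) as [v [Hv _]]. eauto.
  - intros w' _ [r [Hs Ht]] w'' _ HA.
    destruct (sort_dom_val rho x s Hr so1) as [vs [Hvs Hds]].
    destruct (sort_dom_val rho x t Hr so2) as [vt [Hvt Hdt]].
    pose proof (tev_det P rho s r vs Hs Hvs). pose proof (tev_det P rho t r vt Ht Hvt). subst vs vt.
    apply (hs_subst P pi2 x s A1 w'' rho r) in HA; auto; [|apply tev_unique; auto].
    apply (hs_subst P pi2 x t A1 w'' rho r); auto. apply tev_unique; auto.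
  - apply (IH2 w rho Hr w (acc_refl _)). apply IH1; auto.
  - intros w' Ha HB. apply hs_all. intros r Hd.
    apply (IH w' (upd P rho x r) (wsr_upd_dom _ _ _ Hr Hd) w' (acc_refl _)).
    apply (hs_ext P pi2 B1 w' rho); auto. intros y Hy. rewrite upd_neq; auto. intro; subst; tauto.
  - intros w' Ha HA. apply hs_ex in HA. destruct HA as [r [Hd HA]].
    specialize (IH w' (upd P rho x r) (wsr_upd_dom _ _ _ Hr Hd) w' (acc_refl _) HA).
    apply (hs_ext P pi2 B1 w' rho) in IH; auto. intros y Hy. rewrite upd_neq; auto. intro; subst; tauto.
Qed.

End Snd.

Section HTI.
Context {At : Type}.

Fixpoint htsat (H Tm : At -> Prop) (w : bool) (F : iform At) : Prop :=
  match F with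
  | IBot => False
  | IAtom a => (if w then H else Tm) a
  | IAnd _ f => forall i, htsat H Tm w (f i)
  | IOr _ f => exists i, htsat H Tm w (f i)
  | IImp F G => forall w', acc w' w -> htsat H Tm w' F -> htsat H Tm w' G
  end.

Lemma ht_false H Tm F : htsat H Tm false F <-> isat Tm F.
Proof.
  induction F; simpl; try tauto.
  - split; intros Hq i; apply H0; auto.
  - split; intros [i Hi]; exists i; apply H0; auto.
  - split.
    + intros Hi HF. apply IHF2, Hi; [apply acc_refl|apply IHF1; auto].
    + intros Hi w' Ha HF. destruct Ha as [->| ->]; apply IHF2, Hi, IHF1; auto.
Qed.

Lemma ht_same M F : forall w, htsat M M w F <-> isat M F.
Proof.
  induction F; simpl; intros w; try tauto.
  - destruct w; tauto.
  - split; intros Hq i; apply (H i w); auto.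
  - split; intros [i Hi]; exists i; apply (H i w); auto.
  - split.
    + intros Hi HF. apply (IHF2 w), (Hi w); [apply acc_refl|apply (IHF1 w); auto].
    + intros Hi w' Ha HF. apply (IHF2 w'), Hi, (IHF1 w'); auto.
Qed.

Lemma ht_persist H Tm (Hs : forall a, H a -> Tm a) F :
  htsat H Tm true F -> htsat H Tm false F.
Proof.
  induction F; simpl; intros Hx; auto.
  - destruct Hx as [i Hi]; eauto.
  - intros w' Ha. apply Hx. right; destruct Ha; auto.
Qed.

Lemma reduct_lemma J M (HJ : forall a, J a -> M a) F :
  isat J (reduct M F) <-> htsat J M true F.
Proof.
  induction F; simpl.
  - destruct (excluded_middle_informative False); simpl; tauto.
  - destruct (excluded_middle_informative (M a)); simpl; [tauto|]. split; [tauto|]. intros Ha; apply n, HJ; auto.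
  - destruct (excluded_middle_informative (forall i, isat M (f i))) as [Hm|Hm]; simpl.
    + split; intros Hq i; apply H; auto.
    + split; [tauto|]. intros Hq; apply Hm. intros i. apply (ht_false J M), ht_persist; auto.
  - destruct (excluded_middle_informative (exists i, isat M (f i))) as [Hm|Hm]; simpl.
    + split; intros [i Hi]; exists i; apply H; auto.
    + split; [tauto|]. intros [i Hi]; apply Hm. exists i. apply (ht_false J M), ht_persist; auto.
  - destruct (excluded_middle_informative (isat M F1 -> isat M F2)) as [Hm|Hm]; simpl.
    + rewrite IHF1, IHF2. split.
      * intros Hi w' [->| ->]; auto. rewrite !ht_false; auto.
      * intros Hi; apply Hi, acc_refl.
    + split; [tauto|]. intros Hi; apply Hm. intros H1. apply (ht_false J M).
      apply Hi; [apply acc_false|]. apply ht_false; auto.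
Qed.

Lemma reduct_self (M : At -> Prop) F : isat M (reduct M F) <-> isat M F.
Proof. rewrite reduct_lemma; auto. apply ht_same. Qed.

Lemma se_dir (F1 F2 : iform At)
  (Heq : forall H Tm, (forall a, H a -> Tm a) -> forall w, htsat H Tm w F1 <-> htsat H Tm w F2)
  (Phi : iform At -> Prop) M :
  stable_model (fun F => F = F1 \/ Phi F) M -> stable_model (fun F => F = F2 \/ Phi F) M.
Proof.
  intros [S1 S2]. split.
  - intros F [->|HF]; auto.
    rewrite reduct_self, <- (ht_same M F2 false), <- (Heq M M (fun a h => h) false), ht_same, <- reduct_self.
    apply S1; auto.
  - intros J HJ HR. apply S2; auto. intros F [->|HF]; auto.
    rewrite reduct_lemma; auto. apply (Heq J M HJ true). rewrite <- reduct_lemma; auto.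
Qed.

Lemma se_of_ht (F1 F2 : iform At)
  (Heq : forall H Tm, (forall a, H a -> Tm a) -> forall w, htsat H Tm w F1 <-> htsat H Tm w F2)
  (Phi : iform At -> Prop) M :
  stable_model (fun F => F = F1 \/ Phi F) M <-> stable_model (fun F => F = F2 \/ Phi F) M.
Proof.
  split; apply se_dir; auto. intros; symmetry; apply Heq; auto.
Qed.

End HTI.

Section Corr.
Variable P : PT.
Notation T := (pt P).
Notation hs := (hs P).
Variables (H Tm : patom P -> Prop).
Hypothesis HTsub : forall a, H a -> Tm a.
Notation pi0 := (pi0 P H Tm).
Notation pi2 := (pi2 P H Tm).
Notation ht := (htsat H Tm).

Definition agree (th : nat -> T) (rho : var -> T) (l : list nat) := forall v, In v l -> th v = rho (SG, v).
Definition zok (z : var) (s : st) := forall k, z = (SI, k) -> k < snd s.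

Definition zval rho (a : fterm T) (k : Z) := forall r, tev P rho a r <-> r = num P k.

Lemma zval_var rho x k : rho x = num P k -> zval rho (FVar x) k.
Proof. intros E r; simpl; rewrite E; tauto. Qed.
Lemma zval_cst rho k : zval rho (FCst (num P k)) k.
Proof. intros r; simpl; tauto. Qed.
Lemma zval_abs rho a k : zval rho a k -> zval rho (FAbs a) (Z.abs k).
Proof.
  intros Ha r; simpl; split.
  - intros [i [Hi ->]]. apply Ha in Hi; apply num_inj in Hi; subst; auto.
  - intros ->; exists k; split; auto; apply Ha; auto.
Qed.
Lemma zval_add rho a b i j : zval rho a i -> zval rho b j -> zval rho (FAdd a b) (i + j).
Proof.
  intros Ha Hb r; simpl; split.
  - intros [i' [j' [Hi [Hj ->]]]]. apply Ha in Hi; apply Hb in Hj; apply num_inj in Hi, Hj; subst; auto.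
  - intros ->; exists i, j; repeat split; auto; [apply Ha|apply Hb]; auto.
Qed.
Lemma zval_sub rho a b i j : zval rho a i -> zval rho b j -> zval rho (FSub a b) (i - j).
Proof.
  intros Ha Hb r; simpl; split.
  - intros [i' [j' [Hi [Hj ->]]]]. apply Ha in Hi; apply Hb in Hj; apply num_inj in Hi, Hj; subst; auto.
  - intros ->; exists i, j; repeat split; auto; [apply Ha|apply Hb]; auto.
Qed.
Lemma zval_mul rho a b i j : zval rho a i -> zval rho b j -> zval rho (FMul a b) (i * j).
Proof.
  intros Ha Hb r; simpl; split.
  - intros [i' [j' [Hi [Hj ->]]]]. apply Ha in Hi; apply Hb in Hj; apply num_inj in Hi, Hj; subst; auto.
  - intros ->; exists i, j; repeat split; auto; [apply Ha|apply Hb]; auto.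
Qed.

Lemma hs_le w rho a b i j : zval rho a i -> zval rho b j ->
  (hs pi0 w rho (FPred PLe [a; b]) <-> (i <= j)%Z).
Proof.
  intros Ha Hb. rewrite hs_cmp2. simpl. split.
  - intros [ra [rb [H1 [H2 H3]]]]. apply Ha in H1; apply Hb in H2; subst. apply (proj1 (num_le P _ _)); auto.
  - intros Hij. exists (num P i), (num P j). repeat split; [apply Ha|apply Hb|]; auto. apply (proj2 (num_le P _ _)); auto.
Qed.
Lemma hs_lt w rho a b i j : zval rho a i -> zval rho b j ->
  (hs pi0 w rho (FPred PLt [a; b]) <-> (i < j)%Z).
Proof.
  intros Ha Hb. rewrite hs_cmp2. simpl. split.
  - intros [ra [rb [H1 [H2 H3]]]]. apply Ha in H1; apply Hb in H2; subst. apply (proj1 (num_lt P _ _)); auto.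
  - intros Hij. exists (num P i), (num P j). repeat split; [apply Ha|apply Hb|]; auto. apply (proj2 (num_lt P _ _)); auto.
Qed.
Lemma hs_ge w rho a b i j : zval rho a i -> zval rho b j ->
  (hs pi0 w rho (FPred PGe [a; b]) <-> (j <= i)%Z).
Proof.
  intros Ha Hb. rewrite hs_cmp2. simpl. split.
  - intros [ra [rb [H1 [H2 H3]]]]. apply Ha in H1; apply Hb in H2; subst. apply (proj1 (num_le P _ _)).
    destruct H3; auto.
  - intros Hij. exists (num P i), (num P j). repeat split; [apply Ha|apply Hb|]; auto.
    apply (proj2 (num_le P _ _)) in Hij. destruct Hij; auto.
Qed.
Lemma hs_eqz w rho z a k : zval rho a k -> (hs pi0 w rho (FEq (FVar z) a) <-> rho z = num P k).
Proof.
  intros Ha; simpl; split.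
  - intros [r [-> H2]]. apply Ha; auto.
  - intros E. exists (rho z); split; auto. apply Ha; auto.
Qed.

Lemma val_state t : forall z s, fst (snd (val P t z s)) = fst s /\ snd s <= snd (snd (val P t z s)).
Proof.
  induction t; intros z s; simpl; auto.
  - specialize (IHt (SI, snd s) (fst s, S (snd s))).
    destruct (val P t (SI, snd s) (fst s, S (snd s))) as [F1 s1]; simpl in *; lia.
  - specialize (IHt1 (SI, snd s) (fst s, S (S (S (snd s))))).
    destruct (val P t1 (SI, snd s) (fst s, S (S (S (snd s))))) as [F1 s1]; simpl in *.
    specialize (IHt2 (SI, S (snd s)) s1).
    destruct (val P t2 (SI, S (snd s)) s1) as [F2 s2]; simpl in *; lia.
  - specialize (IHt1 (SI, snd s) (fst s, S (S (S (snd s))))).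
    destruct (val P t1 (SI, snd s) (fst s, S (S (S (snd s))))) as [F1 s1]; simpl in *.
    specialize (IHt2 (SI, S (snd s)) s1).
    destruct (val P t2 (SI, S (snd s)) s1) as [F2 s2]; simpl in *; lia.
Qed.

Lemma hs_FExSI {Pr} (pi : bool -> Pr -> list T -> Prop) w rho n (A : form T Pr) :
  hs pi w rho (FEx (SI, n) A) <-> exists k, hs pi w (upd P rho (SI, n) (num P k)) A.
Proof. reflexivity. Qed.
Lemma hs_exs2 {Pr} (pi : bool -> Pr -> list T -> Prop) w rho a b (A : form T Pr) :
  hs pi w rho (FEx (SI, a) (FEx (SI, b) A)) <->
  exists n1 n2, hs pi w (upd P (upd P rho (SI, a) (num P n1)) (SI, b) (num P n2)) A.
Proof. reflexivity. Qed.
Lemma hs_exs3 {Pr} (pi : bool -> Pr -> list T -> Prop) w rho a b c (A : form T Pr) :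
  hs pi w rho (FEx (SI, a) (FEx (SI, b) (FEx (SI, c) A))) <->
  exists n1 n2 n3, hs pi w (upd P (upd P (upd P rho (SI, a) (num P n1)) (SI, b) (num P n2)) (SI, c) (num P n3)) A.
Proof. reflexivity. Qed.
Lemma hs_or {Pr} (pi : bool -> Pr -> list T -> Prop) w rho (A B : form T Pr) :
  hs pi w rho (FOr A B) <-> hs pi w rho A \/ hs pi w rho B.
Proof. reflexivity. Qed.

Lemma agree_updSI th rho l n r : agree th rho l -> agree th (upd P rho (SI, n) r) l.
Proof. intros Ha v Hv; rewrite upd_neq; [apply Ha; auto|discriminate]. Qed.
Lemma agree_sub th rho l1 l2 : agree th rho l2 -> (forall v, In v l1 -> In v l2) -> agree th rho l1.
Proof. intros Ha Hs v Hv; apply Ha, Hs; auto. Qed.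

Lemma zok_neq z s k : zok z s -> snd s <= k -> z <> ((SI, k) : var).
Proof. intros Hz Hk E. apply Hz in E. lia. Qed.

Lemma SIneq a b : a <> b -> ((SI, a) : var) <> (SI, b).
Proof. intros Hab E; inversion E; auto. Qed.

Ltac updsimp := repeat first [ rewrite upd_eq | rewrite upd_neq by (first [apply SIneq; lia | assumption]) ].
Ltac updsimp_in h := repeat first [ rewrite upd_eq in h | rewrite upd_neq in h by (first [apply SIneq; lia | assumption]) ].
Ltac zv := repeat first [ apply zval_mul | apply zval_abs | apply zval_add | apply zval_sub | apply zval_cst
                        | (apply zval_var; updsimp; reflexivity) ].

Lemma val_ok t : forall z s th rho w, agree th rho (tvars t) -> zok z s ->
  (hs pi0 w rho (fst (val P t z s)) <-> tval P th t (rho z)).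
Proof.
  induction t as [c|v|a IHa|o a IHa b IHb|a IHa b IHb]; intros z s th rho w Hag Hz.
  - simpl. split; [intros [r [-> ->]]; auto|intros ->; eauto].
  - simpl. rewrite (Hag v) by (simpl; auto). split; [intros [r [-> ->]]; auto|intros ->; eauto].
  - simpl tval. cbn [val].
    pose proof (IHa (SI, snd s) (fst s, S (snd s)) th) as K.
    destruct (val P a (SI, snd s) (fst s, S (snd s))) as [F1 s1]. simpl fst in K |- *.
    assert (Hzi : forall n, upd P rho (SI, snd s) (num P n) z = rho z).
    { intros n; apply upd_neq. apply (zok_neq z s); auto. }
    rewrite hs_FExSI. split.
    + intros [n Hn]. rewrite hs_and in Hn. destruct Hn as [HF1 HEq].
      apply K in HF1; [|apply agree_updSI; auto|intros k E; inversion E; simpl; lia].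
      rewrite upd_eq in HF1.
      rewrite (hs_eqz _ _ _ _ (Z.abs n)) in HEq.
      * rewrite Hzi in HEq. eauto.
      * apply zval_abs, zval_var, upd_eq.
    + intros [n [Hn HEq]]. exists n. rewrite hs_and. split.
      * apply K; [apply agree_updSI; auto|intros k E; inversion E; simpl; lia|]. rewrite upd_eq; auto.
      * rewrite (hs_eqz _ _ _ _ (Z.abs n)); [rewrite Hzi; auto|]. apply zval_abs, zval_var, upd_eq.
  - cbn [val]. try change (3 + snd s) with (S (S (S (snd s)))).
    pose proof (IHa (SI, snd s) (fst s, S (S (S (snd s)))) th) as K1.
    pose proof (val_state a (SI, snd s) (fst s, S (S (S (snd s))))) as St1.
    destruct (val P a (SI, snd s) (fst s, S (S (S (snd s))))) as [F1 s1]. simpl fst in K1. simpl in St1.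
    pose proof (IHb (SI, S (snd s)) s1 th) as K2.
    destruct (val P b (SI, S (snd s)) s1) as [F2 s2]. simpl fst in K2.
    assert (Ag1 : agree th rho (tvars a)) by (apply (agree_sub _ _ _ _ Hag); intros; simpl; apply in_or_app; auto).
    assert (Ag2 : agree th rho (tvars b)) by (apply (agree_sub _ _ _ _ Hag); intros; simpl; apply in_or_app; auto).
    assert (Z1 : zok (SI, snd s) (fst s, S (S (S (snd s))))) by (intros k E; inversion E; simpl; lia).
    assert (Z2 : zok (SI, S (snd s)) s1) by (intros k E; inversion E; lia).
    assert (Hz0 : z <> (SI, snd s)) by (apply (zok_neq z s); auto).
    assert (Hz1 : z <> (SI, S (snd s))) by (apply (zok_neq z s); auto).
    assert (Hz2 : z <> (SI, S (S (snd s)))) by (apply (zok_neq z s); auto).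
    clear IHa IHb Hag Hz.
    destruct o; simpl fst; simpl tval; cbn [exs fold_right op2].
    + rewrite hs_exs2. split.
      * intros [n1 [n2 Hb]]. rewrite !hs_and in Hb. destruct Hb as [HF1 [HF2 HEq]].
        apply K1 in HF1; [|repeat apply agree_updSI; auto|auto]. apply K2 in HF2; [|repeat apply agree_updSI; auto|auto].
        updsimp_in HF1. updsimp_in HF2.
        rewrite (hs_eqz _ _ _ _ (n1 + n2)) in HEq by zv. updsimp_in HEq. eauto.
      * intros [n1 [n2 [Ha' [Hb' Hr]]]]. exists n1, n2. rewrite !hs_and. split; [|split].
        -- apply K1; [repeat apply agree_updSI; auto|auto|]. updsimp; auto.
        -- apply K2; [repeat apply agree_updSI; auto|auto|]. updsimp; auto.
        -- rewrite (hs_eqz _ _ _ _ (n1 + n2)) by zv. updsimp; auto.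
    + rewrite hs_exs2. split.
      * intros [n1 [n2 Hb]]. rewrite !hs_and in Hb. destruct Hb as [HF1 [HF2 HEq]].
        apply K1 in HF1; [|repeat apply agree_updSI; auto|auto]. apply K2 in HF2; [|repeat apply agree_updSI; auto|auto].
        updsimp_in HF1. updsimp_in HF2.
        rewrite (hs_eqz _ _ _ _ (n1 - n2)) in HEq by zv. updsimp_in HEq. eauto.
      * intros [n1 [n2 [Ha' [Hb' Hr]]]]. exists n1, n2. rewrite !hs_and. split; [|split].
        -- apply K1; [repeat apply agree_updSI; auto|auto|]. updsimp; auto.
        -- apply K2; [repeat apply agree_updSI; auto|auto|]. updsimp; auto.
        -- rewrite (hs_eqz _ _ _ _ (n1 - n2)) by zv. updsimp; auto.
    + rewrite hs_exs2. split.
      * intros [n1 [n2 Hb]]. rewrite !hs_and in Hb. destruct Hb as [HF1 [HF2 HEq]].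
        apply K1 in HF1; [|repeat apply agree_updSI; auto|auto]. apply K2 in HF2; [|repeat apply agree_updSI; auto|auto].
        updsimp_in HF1. updsimp_in HF2.
        rewrite (hs_eqz _ _ _ _ (n1 * n2)) in HEq by zv. updsimp_in HEq. eauto.
      * intros [n1 [n2 [Ha' [Hb' Hr]]]]. exists n1, n2. rewrite !hs_and. split; [|split].
        -- apply K1; [repeat apply agree_updSI; auto|auto|]. updsimp; auto.
        -- apply K2; [repeat apply agree_updSI; auto|auto|]. updsimp; auto.
        -- rewrite (hs_eqz _ _ _ _ (n1 * n2)) by zv. updsimp; auto.
    + rewrite hs_exs3. split.
      * intros [n1 [n2 [n3 Hb]]]. rewrite !hs_and in Hb. destruct Hb as [HF1 [HF2 [[Hd1 Hd2] Hor]]].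
        apply K1 in HF1; [|repeat apply agree_updSI; auto|auto]. apply K2 in HF2; [|repeat apply agree_updSI; auto|auto].
        updsimp_in HF1. updsimp_in HF2.
        rewrite (hs_le _ _ _ _ (n3 * Z.abs n2) (Z.abs n1)) in Hd1 by zv.
        rewrite (hs_lt _ _ _ _ (Z.abs n1) ((n3 + 1) * Z.abs n2)) in Hd2 by zv.
        exists n1, n2. split; auto. split; auto. exists n3. split; [lia|].
        rewrite hs_or, !hs_and in Hor. destruct Hor as [[Hp Hq]|[Hp Hq]].
        -- rewrite (hs_ge _ _ _ _ (n1 * n2) 0) in Hp by zv.
           rewrite (hs_eqz _ _ _ _ n3) in Hq by zv. updsimp_in Hq. left; split; [lia|auto].
        -- rewrite (hs_lt _ _ _ _ (n1 * n2) 0) in Hp by zv.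
           rewrite (hs_eqz _ _ _ _ (0 - n3)) in Hq by zv. updsimp_in Hq. right; split; [lia|].
           rewrite Hq; f_equal; lia.
      * intros [n1 [n2 [Ha' [Hb' [n3 [Hd Hr]]]]]]. exists n1, n2, n3. rewrite !hs_and. split; [|split; [|split]].
        -- apply K1; [repeat apply agree_updSI; auto|auto|]. updsimp; auto.
        -- apply K2; [repeat apply agree_updSI; auto|auto|]. updsimp; auto.
        -- rewrite (hs_le _ _ _ _ (n3 * Z.abs n2) (Z.abs n1)) by zv.
           rewrite (hs_lt _ _ _ _ (Z.abs n1) ((n3 + 1) * Z.abs n2)) by zv. lia.
        -- try rewrite hs_or; try rewrite !hs_and. destruct Hr as [[Hp Hq]|[Hp Hq]].
           ++ left. rewrite (hs_ge _ _ _ _ (n1 * n2) 0) by zv.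
              rewrite (hs_eqz _ _ _ _ n3) by zv. updsimp. split; [lia|auto].
           ++ right. rewrite (hs_lt _ _ _ _ (n1 * n2) 0) by zv.
              rewrite (hs_eqz _ _ _ _ (0 - n3)) by zv. updsimp. split; [lia|]. rewrite Hq; f_equal; lia.
    + rewrite hs_exs3. split.
      * intros [n1 [n2 [n3 Hb]]]. rewrite !hs_and in Hb. destruct Hb as [HF1 [HF2 [[Hd1 Hd2] Hor]]].
        apply K1 in HF1; [|repeat apply agree_updSI; auto|auto]. apply K2 in HF2; [|repeat apply agree_updSI; auto|auto].
        updsimp_in HF1. updsimp_in HF2.
        rewrite (hs_le _ _ _ _ (n3 * Z.abs n2) (Z.abs n1)) in Hd1 by zv.
        rewrite (hs_lt _ _ _ _ (Z.abs n1) ((n3 + 1) * Z.abs n2)) in Hd2 by zv.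
        exists n1, n2. split; auto. split; auto. exists n3. split; [lia|].
        rewrite hs_or, !hs_and in Hor. destruct Hor as [[Hp Hq]|[Hp Hq]].
        -- rewrite (hs_ge _ _ _ _ (n1 * n2) 0) in Hp by zv.
           rewrite (hs_eqz _ _ _ _ (n1 - n3 * n2)) in Hq by zv. updsimp_in Hq. left; split; [lia|auto].
        -- rewrite (hs_lt _ _ _ _ (n1 * n2) 0) in Hp by zv.
           rewrite (hs_eqz _ _ _ _ (n1 + n3 * n2)) in Hq by zv. updsimp_in Hq. right; split; [lia|auto].
      * intros [n1 [n2 [Ha' [Hb' [n3 [Hd Hr]]]]]]. exists n1, n2, n3. rewrite !hs_and. split; [|split; [|split]].
        -- apply K1; [repeat apply agree_updSI; auto|auto|]. updsimp; auto.
        -- apply K2; [repeat apply agree_updSI; auto|auto|]. updsimp; auto.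
        -- rewrite (hs_le _ _ _ _ (n3 * Z.abs n2) (Z.abs n1)) by zv.
           rewrite (hs_lt _ _ _ _ (Z.abs n1) ((n3 + 1) * Z.abs n2)) by zv. lia.
        -- try rewrite hs_or; try rewrite !hs_and. destruct Hr as [[Hp Hq]|[Hp Hq]].
           ++ left. rewrite (hs_ge _ _ _ _ (n1 * n2) 0) by zv.
              rewrite (hs_eqz _ _ _ _ (n1 - n3 * n2)) by zv. updsimp. split; [lia|auto].
           ++ right. rewrite (hs_lt _ _ _ _ (n1 * n2) 0) by zv.
              rewrite (hs_eqz _ _ _ _ (n1 + n3 * n2)) by zv. updsimp. split; [lia|auto].
  - cbn [val]. try change (3 + snd s) with (S (S (S (snd s)))).
    pose proof (IHa (SI, snd s) (fst s, S (S (S (snd s)))) th) as K1.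
    pose proof (val_state a (SI, snd s) (fst s, S (S (S (snd s))))) as St1.
    destruct (val P a (SI, snd s) (fst s, S (S (S (snd s))))) as [F1 s1]. simpl fst in K1. simpl in St1.
    pose proof (IHb (SI, S (snd s)) s1 th) as K2.
    destruct (val P b (SI, S (snd s)) s1) as [F2 s2]. simpl fst in K2.
    assert (Ag1 : agree th rho (tvars a)) by (apply (agree_sub _ _ _ _ Hag); intros; simpl; apply in_or_app; auto).
    assert (Ag2 : agree th rho (tvars b)) by (apply (agree_sub _ _ _ _ Hag); intros; simpl; apply in_or_app; auto).
    assert (Z1 : zok (SI, snd s) (fst s, S (S (S (snd s))))) by (intros k E; inversion E; simpl; lia).
    assert (Z2 : zok (SI, S (snd s)) s1) by (intros k E; inversion E; lia).
    assert (Hz0 : z <> (SI, snd s)) by (apply (zok_neq z s); auto).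
    assert (Hz1 : z <> (SI, S (snd s))) by (apply (zok_neq z s); auto).
    assert (Hz2 : z <> (SI, S (S (snd s)))) by (apply (zok_neq z s); auto).
    clear IHa IHb Hag Hz.
    simpl fst; simpl tval; cbn [exs fold_right]. rewrite hs_exs3. split.
    + intros [n1 [n2 [n3 Hb]]]. rewrite !hs_and in Hb. destruct Hb as [HF1 [HF2 [[Hd1 Hd2] HEq]]].
      apply K1 in HF1; [|repeat apply agree_updSI; auto|auto]. apply K2 in HF2; [|repeat apply agree_updSI; auto|auto].
      updsimp_in HF1. updsimp_in HF2.
      rewrite (hs_le _ _ _ _ n1 n3) in Hd1 by zv. rewrite (hs_le _ _ _ _ n3 n2) in Hd2 by zv.
      rewrite (hs_eqz _ _ _ _ n3) in HEq by zv. updsimp_in HEq. exists n1, n2, n3. auto.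
    + intros [n1 [n2 [n3 [Ha' [Hb' [Hd Hr]]]]]]. exists n1, n2, n3. rewrite !hs_and. split; [|split; [|split]].
      * apply K1; [repeat apply agree_updSI; auto|auto|]. updsimp; auto.
      * apply K2; [repeat apply agree_updSI; auto|auto|]. updsimp; auto.
      * rewrite (hs_le _ _ _ _ n1 n3) by zv. rewrite (hs_le _ _ _ _ n3 n2) by zv. lia.
      * rewrite (hs_eqz _ _ _ _ n3) by zv. updsimp; auto.
Qed.


Lemma fresh_gens_eq n : forall s, fresh_gens n s = (gv (seq (fst s) n), (fst s + n, snd s)).
Proof.
  induction n; intros s; simpl.
  - rewrite Nat.add_0_r; destruct s; auto.
  - rewrite IHn. simpl. f_equal. f_equal. lia.
Qed.

Lemma val_list_state ts : forall zs s, fst (snd (val_list P ts zs s)) = fst s /\ snd s <= snd (snd (val_list P ts zs s)).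
Proof.
  induction ts as [|t ts IH]; intros zs s; destruct zs as [|z zs]; simpl; auto.
  pose proof (val_state t z s) as S1. destruct (val P t z s) as [F s1]. simpl in S1.
  specialize (IH zs s1). destruct (val_list P ts zs s1) as [Fs s2]. simpl in *; lia.
Qed.

Lemma zok_SG z s : fst z = SG -> zok z s.
Proof. intros Hz k E; subst; discriminate. Qed.

Lemma val_list_ok ts : forall zs s th rho w, length ts = length zs -> (forall z, In z zs -> fst z = SG) ->
  agree th rho (flat_map tvars ts) ->
  (hs pi0 w rho (bigAnd (fst (val_list P ts zs s))) <-> Forall2 (tval P th) ts (map rho zs)).
Proof.
  induction ts as [|t ts IH]; intros zs s th rho w Hl Hs Ha; destruct zs as [|z zs]; simpl in Hl; try discriminate.
  - simpl. split; auto.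
  - cbn [val_list].
    pose proof (val_ok t z s th rho w) as K.
    destruct (val P t z s) as [F s1]. simpl fst in K.
    specialize (IH zs s1 th rho w).
    destruct (val_list P ts zs s1) as [Fs s2]. simpl fst in *.
    rewrite hs_bigAnd, Forall_cons_iff, <- hs_bigAnd, IH, K; simpl map.
    + split; [intros [A1 A2]; constructor; auto|intros HF; inversion HF; auto].
    + eapply agree_sub; eauto; intros; simpl; apply in_or_app; auto.
    + apply zok_SG, Hs; simpl; auto.
    + lia.
    + intros; apply Hs; simpl; auto.
    + eapply agree_sub; eauto; intros; simpl; apply in_or_app; auto.
Qed.

Lemma hs_signed w rho sg p n zs :
  hs pi0 w rho (signedF P sg (FPred (PSym p n) (vts zs))) <-> ht w (signed P sg (IAtom (p, map rho zs))).
Proof.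
  assert (B : forall w, hs pi0 w rho (FPred (PSym p n) (vts zs)) <-> ht w (IAtom (p, map rho zs))).
  { intros w'; simpl. split.
    - intros [rs [HF Hp]]. apply Forall2_vts in HF; subst; auto.
    - intros Hp. exists (map rho zs); split; auto. apply Forall2_vts; auto. }
  destruct sg; simpl.
  - apply B.
  - split; intros Hi w' Ha Hx; apply (Hi w' Ha); apply B; auto.
  - split; intros Hi w' Ha Hx; apply (Hi w' Ha); intros w'' Ha' Hy; apply (Hx w'' Ha'); apply B; auto.
Qed.

Lemma hs_exsG2 {Pr} (pi : bool -> Pr -> list T -> Prop) w rho a b (A : form T Pr) :
  hs pi w rho (FEx (SG, a) (FEx (SG, b) A)) <->
  exists r1 r2, hs pi w (upd P (upd P rho (SG, a) r1) (SG, b) r2) A.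
Proof. reflexivity. Qed.

Lemma tauB_lit_state l s : fst s <= fst (snd (tauB_lit P l s)) /\ snd s <= snd (snd (tauB_lit P l s)).
Proof.
  destruct l as [sg p ts|r a b]; cbn [tauB_lit].
  - rewrite fresh_gens_eq. pose proof (val_list_state ts (gv (seq (fst s) (length ts))) (fst s + length ts, snd s)) as S1.
    destruct (val_list P ts _ _) as [Fs s2]. simpl in *; lia.
  - pose proof (val_state a (SG, fst s) (2 + fst s, snd s)) as S1.
    destruct (val P a (SG, fst s) (2 + fst s, snd s)) as [F1 s1]. simpl in S1.
    pose proof (val_state b (SG, S (fst s)) s1) as S2.
    destruct (val P b (SG, S (fst s)) s1) as [F2 s2]. simpl in *; lia.
Qed.

Lemma cmp_ok w rho r x y : hs pi0 w rho (cmp_form P r (FVar x) (FVar y)) <-> relP P r (rho x) (rho y).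
Proof.
  destruct r; simpl.
  1: split; [intros [r0 [-> ->]]; auto|intros E; exists (rho x); auto].
  all: split; [intros [rs [HF Hp]]; inversion HF as [|a b l l' Ha Hr]; subst;
               inversion Hr as [|a' b' l2 l2' Ha' Hr']; subst; inversion Hr'; subst; simpl in *; subst; auto
              |intros Hp; exists [rho x; rho y]; split; [repeat constructor|]; auto].
Qed.

Lemma tauB_lit_ok l s th rho w : agree th rho (lvars l) -> (forall v, In v (lvars l) -> v < fst s) ->
  (hs pi0 w rho (fst (tauB_lit P l s)) <-> ht w (tau_lit P th l)).
Proof.
  intros Ha Hlt. destruct l as [sg p ts|r a b]; cbn [tauB_lit tau_lit].
  - rewrite fresh_gens_eq.
    pose proof (val_list_ok ts (gv (seq (fst s) (length ts))) (fst s + length ts, snd s) th) as K.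
    destruct (val_list P ts _ _) as [Fs s2]. simpl fst in *.
    rewrite hs_exs_gv. simpl htsat.
    assert (ND : NoDup (gv (seq (fst s) (length ts)))) by (apply gv_NoDup, seq_NoDup).
    assert (LL : length (gv (seq (fst s) (length ts))) = length ts) by (rewrite gv_length, length_seq; auto).
    assert (Ag : forall vals, agree th (updl P rho (gv (seq (fst s) (length ts))) vals) (flat_map tvars ts)).
    { intros vals v Hv. rewrite updl_notin. apply Ha; auto.
      rewrite gv_in, in_seq. simpl in Hlt. specialize (Hlt v Hv). lia. }
    split.
    + intros [vals [Hl Hb]]. rewrite hs_and in Hb. destruct Hb as [Hb Hsg].
      try rewrite length_seq in Hl.
      apply K in Hb; auto; [|intros z Hz; apply gv_sort in Hz; auto].
      rewrite map_updl in Hb; auto; [|rewrite LL; auto].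
      rewrite hs_signed, map_updl in Hsg; auto; [|rewrite LL; auto].
      exists (exist _ vals Hb). simpl. auto.
    + intros [[vals Hv] Hsg]. simpl in Hsg. exists vals.
      assert (Hl : length vals = length ts) by (symmetry; eapply Forall2_length; eauto).
      split; [rewrite length_seq; auto|]. rewrite hs_and. split.
      * apply K; auto; [intros z Hz; apply gv_sort in Hz; auto|]. rewrite map_updl; auto. rewrite LL; auto.
      * rewrite hs_signed, map_updl; auto. rewrite LL; auto.
  - pose proof (val_ok a (SG, fst s) (2 + fst s, snd s) th) as K1.
    pose proof (val_state a (SG, fst s) (2 + fst s, snd s)) as S1.
    destruct (val P a (SG, fst s) (2 + fst s, snd s)) as [F1 s1]. simpl in S1. simpl fst in K1.
    pose proof (val_ok b (SG, S (fst s)) s1 th) as K2.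
    destruct (val P b (SG, S (fst s)) s1) as [F2 s2]. simpl fst in *.
    cbn [exs fold_right]. rewrite hs_exsG2.
    assert (Ag : forall r1 r2, agree th (upd P (upd P rho (SG, fst s) r1) (SG, S (fst s)) r2) (lvars (LCmp r a b))).
    { intros r1 r2 v Hv. rewrite !upd_neq. apply Ha; auto.
      all: intro E; inversion E; subst; specialize (Hlt _ Hv); lia. }
    assert (Hne : ((SG, fst s) : var) <> (SG, S (fst s))) by (intro E; inversion E; lia).
    destruct (excluded_middle_informative (exists a0 b0, tval P th a a0 /\ tval P th b b0 /\ relP P r a0 b0)) as [Hx|Hx];
      simpl htsat.
    + split; [intros _ []|intros _].
      destruct Hx as [r1 [r2 [H1 [H2 H3]]]]. exists r1, r2. rewrite !hs_and. split; [|split].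
      * apply K1; [eapply agree_sub; [apply Ag|]; intros; simpl; apply in_or_app; auto|apply zok_SG; auto|].
        rewrite upd_neq, upd_eq; auto.
      * apply K2; [eapply agree_sub; [apply Ag|]; intros; simpl; apply in_or_app; auto|apply zok_SG; auto|].
        rewrite upd_eq; auto.
      * apply cmp_ok. rewrite upd_neq, !upd_eq; auto.
    + split; [|intros []]. intros [r1 [r2 Hb]]. rewrite !hs_and in Hb. destruct Hb as [HF1 [HF2 Hc]].
      apply K1 in HF1; [|eapply agree_sub; [apply Ag|]; intros; simpl; apply in_or_app; auto|apply zok_SG; auto].
      apply K2 in HF2; [|eapply agree_sub; [apply Ag|]; intros; simpl; apply in_or_app; auto|apply zok_SG; auto].
      rewrite upd_neq, upd_eq in HF1; auto. rewrite upd_eq in HF2.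
      apply cmp_ok in Hc. rewrite upd_neq, !upd_eq in Hc; auto.
      apply Hx. exists r1, r2. auto.
Qed.

End Corr.

Section Comb.
Variable P : PT.
Notation T := (pt P).
Variables (H Tm : patom P -> Prop).
Notation lexs := (lexs P).
Notation startn := (startn P H Tm).
Notation Fsem := (Fsem P H Tm).

Lemma lexs_irrefl a : ~ lexs a a.
Proof.
  induction a; simpl; auto. intros [Hl|[_ Hl]]; [eapply ptlt_irrefl; eauto|auto].
Qed.

Lemma lexs_trans a : forall b c, lexs a b -> lexs b c -> lexs a c.
Proof.
  induction a as [|x a IH]; intros [|y b] [|z c]; simpl; auto; try tauto.
  intros [H1|[-> H1]] [H2|[-> H2]].
  - left; eapply ptlt_trans; eauto.
  - left; auto.
  - left; auto.
  - right; split; eauto.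
Qed.

Lemma lexs_total a : forall b, length a = length b -> lexs a b \/ a = b \/ lexs b a.
Proof.
  induction a as [|x a IH]; intros [|y b] Hl; simpl in *; try discriminate; auto.
  destruct (ptlt_total P x y) as [Hxy|[<-|Hyx]]; auto.
  destruct (IH b ltac:(lia)) as [Hl'|[<-|Hl']]; auto.
Qed.

Lemma lexs_min (k : nat) (D : list (list T)) : D <> [] -> (forall y, In y D -> length y = k) ->
  exists m, In m D /\ forall y, In y D -> y = m \/ lexs m y.
Proof.
  induction D as [|a D IH]; intros Hne Hl; [congruence|].
  destruct D as [|b D'].
  - exists a; split; simpl; auto. intros y [<-|[]]; auto.
  - destruct IH as [m [Hm Hmin]]; [discriminate|intros; apply Hl; simpl; auto|].
    destruct (lexs_total a m) as [Ham|[<-|Hma]].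
    + rewrite (Hl a), (Hl m); simpl; auto.
    + exists a; split; simpl; auto. intros y [<-|Hy]; auto.
      destruct (Hmin y Hy) as [->|Hmy]; auto. right; eapply lexs_trans; eauto.
    + exists a; split; simpl; auto. intros y [<-|Hy]; auto.
    + exists m; split; [simpl; auto|]. intros y [<-|Hy]; auto.
Qed.

Lemma chain_list X V F w vs n : forall xs, length xs = length X -> startn w X V F vs (S n) xs ->
  exists D, length D = S n /\ NoDup D /\
    (forall y, In y D -> length y = length X /\ Fsem w X V F y vs) /\
    (forall y, In y D -> y = xs \/ lexs xs y).
Proof.
  induction n as [|n IH]; intros xs Hl Hs.
  - destruct Hs as [Hf _]. exists [xs]. split; [auto|]. split; [constructor; [simpl; auto|constructor]|].
    split.
    + intros y' [<-|[]]; auto.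
    + intros y' [<-|[]]; auto.
  - destruct Hs as [Hf [us [Hlu [Hlx Hs]]]].
    destruct (IH us Hlu Hs) as [D [HlD [Hnd [Hall Hge]]]].
    exists (xs :: D). split; [simpl; lia|]. split; [|split].
    + constructor; auto. intros Hin. destruct (Hge xs Hin) as [E|E].
      * subst; eapply lexs_irrefl; eauto.
      * eapply lexs_irrefl, lexs_trans; eauto.
    + intros y0 [<-|Hy]; [split; auto|apply Hall; auto].
    + intros y0 [<-|Hy]; auto. right. destruct (Hge y0 Hy) as [->|E]; auto. eapply lexs_trans; eauto.
Qed.

Lemma list_chain X V F w vs n : forall D, length D = S n -> NoDup D ->
  (forall y, In y D -> length y = length X /\ Fsem w X V F y vs) ->
  exists m, In m D /\ startn w X V F vs (S n) m.
Proof.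
  induction n as [|n IH]; intros D HlD Hnd Hall.
  - destruct D as [|a [|]]; simpl in HlD; try discriminate.
    exists a; split; simpl; auto. split; auto. apply Hall; simpl; auto.
  - destruct (lexs_min (length X) D) as [m [Hm Hmin]].
    + intro; subst; discriminate.
    + intros; apply Hall; auto.
    + apply in_split in Hm. destruct Hm as [D1 [D2 ->]].
      pose proof (NoDup_remove _ _ _ Hnd) as [Hnd' Hnin].
      destruct (IH (D1 ++ D2)) as [m' [Hm' Hs']].
      * rewrite length_app in *; simpl in HlD; lia.
      * auto.
      * intros y Hy; apply Hall. apply in_app_or in Hy; apply in_or_app; simpl; tauto.
      * exists m. split; [apply in_or_app; simpl; auto|].
        split; [apply Hall; apply in_or_app; simpl; auto|].
        exists m'. split; [apply Hall; apply in_app_or in Hm'; apply in_or_app; simpl; tauto|].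
        split; auto.
        destruct (Hmin m') as [E|E]; auto.
        -- apply in_app_or in Hm'; apply in_or_app; simpl; tauto.
        -- subst. contradiction.
Qed.

Lemma ple_trans a b c : (ptlt P a b \/ a = b) -> (ptlt P b c \/ b = c) -> (ptlt P a c \/ a = c).
Proof.
  intros [H1| ->] [H2| ->]; auto. left; eapply ptlt_trans; eauto.
Qed.

Definition dok (k : nat) (D : list (list T)) := NoDup D /\ Forall (fun x => length x = k) D.

Lemma atleast_equiv X V F w vs c :
  (exists xs k, length xs = length X /\ startn w X V F vs (Z.to_nat k) xs /\
     (ptlt P c (num P k) \/ num P k = c)) <->
  (exists D, dok (length X) D /\ (ptlt P c (num P (Z.of_nat (length D))) \/ c = num P (Z.of_nat (length D))) /\
     forall x, In x D -> Fsem w X V F x vs).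
Proof.
  split.
  - intros [xs [k [Hl [Hs Hc]]]].
    destruct (Z.to_nat k) as [|n] eqn:Ek.
    + exists []. split; [split; constructor|]. split; [|intros _ []].
      simpl. assert (Hk : (k <= 0)%Z) by lia.
      assert (Hk' : ptlt P (num P k) (num P 0) \/ num P k = num P 0) by (apply num_le; auto).
      assert (Hc' : ptlt P c (num P k) \/ c = num P k) by (destruct Hc; auto).
      exact (ple_trans _ _ _ Hc' Hk').
    + assert (Ek' : k = Z.of_nat (S n)) by lia.
      destruct (chain_list X V F w vs n xs Hl Hs) as [D [HlD [Hnd [Hall _]]]].
      exists D. split; [split; auto; apply Forall_forall; intros; apply Hall; auto|].
      split; [|intros; apply Hall; auto]. rewrite HlD, <- Ek'. destruct Hc; auto.
  - intros [D [[Hnd HF] [Hc Hall]]]. rewrite Forall_forall in HF.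
    destruct (length D) as [|n] eqn:HlD.
    + exists (repeat (num P 0) (length X)), 0%Z. split; [apply repeat_length|]. split; [simpl; auto|].
      simpl in Hc. destruct Hc; auto.
    + destruct (list_chain X V F w vs n D HlD Hnd) as [m [Hm Hs]].
      { intros y Hy; split; auto. }
      exists m, (Z.of_nat (S n)). split; auto. rewrite Nat2Z.id. split; auto. destruct Hc; auto.
Qed.

Lemma ptlt_ple_absurd a b : ptlt P a b -> (ptlt P b a \/ b = a) -> False.
Proof.
  intros H1 [H2| ->]; eapply ptlt_irrefl; [eapply ptlt_trans; eauto|eauto].
Qed.

Lemma atmost_equiv X V F w vs c :
  (forall xs k, length xs = length X -> startn w X V F vs (Z.to_nat k) xs ->
     ptlt P (num P k) c \/ num P k = c) <->
  (forall D, dok (length X) D -> ptlt P c (num P (Z.of_nat (length D))) ->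
     ~ (forall x, In x D -> Fsem w X V F x vs)).
Proof.
  split.
  - intros Hq D [Hnd HF] Hlt Hall. rewrite Forall_forall in HF.
    destruct (length D) as [|n] eqn:HlD.
    + specialize (Hq (repeat (num P 0) (length X)) 0%Z (repeat_length _ _) I).
      simpl in Hlt. eapply ptlt_ple_absurd; eauto.
    + destruct (list_chain X V F w vs n D HlD Hnd) as [m [Hm Hs]].
      { intros y Hy; split; auto. }
      specialize (Hq m (Z.of_nat (S n)) (HF m Hm)). rewrite Nat2Z.id in Hq.
      eapply ptlt_ple_absurd; eauto.
  - intros Hq xs k Hl Hs.
    destruct (ptlt_total P c (num P k)) as [Hlt|[E|Hgt]]; auto.
    exfalso. destruct (Z.to_nat k) as [|n] eqn:Ek.
    + apply (Hq [] (conj (NoDup_nil _) (Forall_nil _))); [|intros _ []].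
      simpl. assert (Hk : ptlt P (num P k) (num P 0) \/ num P k = num P 0) by (apply num_le; lia).
      destruct Hk as [Hk|Hk]; [eapply ptlt_trans; eauto|rewrite <- Hk; auto].
    + destruct (chain_list X V F w vs n xs Hl Hs) as [D [HlD [Hnd [Hall _]]]].
      apply (Hq D).
      * split; auto. apply Forall_forall; intros; apply Hall; auto.
      * rewrite HlD. replace (Z.of_nat (S n)) with k by lia. auto.
      * intros; apply Hall; auto.
Qed.


End Comb.

Section Star.
Variable P : PT.
Notation T := (pt P).
Notation hs := (hs P).
Variables (H Tm : patom P -> Prop).
Hypothesis HTsub : forall a, H a -> Tm a.
Notation pi0 := (pi0 P H Tm).
Notation pi2 := (pi2 P H Tm).
Notation ht := (htsat H Tm).
Notation updl := (updl P).
Notation Fsem := (Fsem P H Tm).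

Lemma ext_notin vs xs th v : ~ In v vs -> ext P vs xs th v = th v.
Proof.
  revert xs; induction vs as [|a vs IH]; intros [|x xs] Hn; simpl; auto.
  destruct (Nat.eqb_spec v a); [subst; exfalso; apply Hn; simpl; auto|].
  apply IH; intro; apply Hn; simpl; auto.
Qed.

Lemma updl_ext r X xs th v : NoDup X -> length xs = length X -> In v X ->
  updl r (gv X) xs (SG, v) = ext P X xs th v.
Proof.
  revert r xs; induction X as [|a X IH]; intros r [|x xs] Hnd Hl Hin; simpl in *; try discriminate; try tauto.
  inversion Hnd; subst.
  destruct (Nat.eqb_spec v a).
  - subst. rewrite updl_notin; [apply upd_eq|]. rewrite gv_in; auto.
  - destruct Hin as [E|Hin]; [congruence|]. apply IH; auto.
Qed.

Lemma tauB_list_state L : forall s, fst s <= fst (snd (tauB_list P L s)) /\ snd s <= snd (snd (tauB_list P L s)).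
Proof.
  induction L as [|l L IH]; intros s; simpl; auto.
  pose proof (tauB_lit_state P l s) as S1. destruct (tauB_lit P l s) as [F s1]. simpl in S1.
  specialize (IH s1). destruct (tauB_list P L s1) as [Fs s2]. simpl in *; lia.
Qed.

Lemma tauB_list_ok L : forall s th rho w, agree P th rho (Lvars L) -> (forall v, In v (Lvars L) -> v < fst s) ->
  (hs pi0 w rho (bigAnd (fst (tauB_list P L s))) <-> forall l, In l L -> ht w (tau_lit P th l)).
Proof.
  induction L as [|l L IH]; intros s th rho w Ha Hlt.
  - simpl. split; auto. intros _ l [].
  - cbn [tauB_list].
    pose proof (tauB_lit_ok P H Tm l s th rho w) as K.
    pose proof (tauB_lit_state P l s) as S1.
    destruct (tauB_lit P l s) as [F s1]. simpl fst in *.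
    specialize (IH s1 th rho w).
    destruct (tauB_list P L s1) as [Fs s2]. simpl fst in *.
    rewrite hs_bigAnd, Forall_cons_iff, <- hs_bigAnd, IH, K.
    + split; [intros [A1 A2] l' [<-|Hl']; auto|intros Hq; split; [apply Hq; simpl|intros; apply Hq; simpl]; auto].
    + eapply agree_sub; eauto; intros; unfold Lvars; simpl; apply in_or_app; auto.
    + intros v Hv; apply Hlt; unfold Lvars; simpl; apply in_or_app; auto.
    + eapply agree_sub; eauto; intros; unfold Lvars; simpl; apply in_or_app; auto.
    + intros v Hv. assert (v < fst s) by (apply Hlt; unfold Lvars; simpl; apply in_or_app; auto). lia.
Qed.

Lemma ht_tau_conj w th L : ht w (tau_conj P th L) <-> forall l, In l L -> ht w (tau_lit P th l).
Proof.
  simpl. split.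
  - intros Hq l Hl. apply (Hq (exist _ l Hl)).
  - intros Hq [l Hl]; simpl; auto.
Qed.

Lemma ht_tau_elem w th X W L xs : ht w (tau_elem P th X W L xs) <->
  exists ws, length ws = length W /\ forall l, In l L -> ht w (tau_lit P (ext P X xs (ext P W ws th)) l).
Proof.
  unfold tau_elem. simpl htsat. split.
  - intros [[ws Hws] Hq]. exists ws; split; auto. apply ht_tau_conj; auto.
  - intros [ws [Hws Hq]]. exists (exist _ ws Hws). apply ht_tau_conj; auto.
Qed.

Lemma elem_ok w th rho X V W L s1 xs :
  NoDup X -> NoDup V -> NoDup W ->
  (forall v, In v X -> ~ In v V) -> (forall v, In v W -> ~ In v X) -> (forall v, In v W -> ~ In v V) ->
  (forall v, In v (Lvars L) -> In v X \/ In v W \/ In v V) ->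
  agree P th rho V -> (forall v, In v (Lvars L) -> v < fst s1) ->
  length xs = length X ->
  (Fsem w X V (exs (gv W) (bigAnd (fst (tauB_list P L s1)))) xs (map rho (gv V)) <->
   ht w (tau_elem P th X W L xs)).
Proof.
  intros HnX HnV HnW HXV HWX HWV Hcov Hag Hlt Hl.
  unfold Fsem. rewrite hs_exs_gv, ht_tau_elem.
  assert (K : forall ws, length ws = length W ->
     (hs pi0 w (updl (updl (updl (rho0 P) (gv X) xs) (gv V) (map rho (gv V))) (gv W) ws)
        (bigAnd (fst (tauB_list P L s1))) <->
      forall l, In l L -> ht w (tau_lit P (ext P X xs (ext P W ws th)) l))).
  { intros ws Hws. apply tauB_list_ok; auto.
    intros v Hv. destruct (classic (In v X)) as [HX|HX].
    - rewrite updl_notin; [|rewrite gv_in; intro; eapply HWX; eauto].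
      rewrite updl_notin; [|rewrite gv_in; intro; eapply HXV; eauto].
      symmetry; apply updl_ext; auto.
    - rewrite (ext_notin X); auto. destruct (classic (In v W)) as [HW|HW].
      + symmetry; apply updl_ext; auto.
      + rewrite (ext_notin W); auto. rewrite updl_notin; [|rewrite gv_in; auto].
        destruct (Hcov v Hv) as [?|[?|HV]]; try tauto.
        rewrite updl_map_in; [|rewrite gv_in; auto]. apply Hag; auto. }
  split.
  - intros [ws [Hws Hb]]. exists ws; split; auto. apply K; auto.
  - intros [ws [Hws Hb]]. exists ws; split; auto. apply K; auto.
Qed.

Lemma In_vvars (R : rule T) L v : In v (vvars R L) <-> In v (Lvars L) /\ In v (globals R).
Proof.
  unfold vvars. rewrite filter_In, nodup_In.
  destruct (in_dec Nat.eq_dec v (globals R)); split; intros [? ?]; auto; try discriminate; tauto.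
Qed.
Lemma In_wvars (R : rule T) X L v : In v (wvars R X L) <-> In v (Lvars L) /\ ~ In v (globals R) /\ ~ In v X.
Proof.
  unfold wvars. rewrite filter_In, nodup_In.
  destruct (in_dec Nat.eq_dec v (globals R)); destruct (in_dec Nat.eq_dec v X); split;
    intros HH; try destruct HH as [? HH]; try discriminate; try tauto.
Qed.
Lemma NoDup_vvars (R : rule T) L : NoDup (vvars R L).
Proof. apply NoDup_filter, NoDup_nodup. Qed.
Lemma NoDup_wvars (R : rule T) X L : NoDup (wvars R X L).
Proof. apply NoDup_filter, NoDup_nodup. Qed.

Lemma hs_FExSG {Pr} (pi : bool -> Pr -> list T -> Prop) w rho n (A : form T Pr) :
  hs pi w rho (FEx (SG, n) A) <-> exists r, hs pi w (upd P rho (SG, n) r) A.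
Proof. reflexivity. Qed.

Lemma hs_pred_args {Pr} (pi : bool -> Pr -> list T -> Prop) w rho pr xs c :
  hs pi w rho (FPred pr (vts xs ++ [FVar c])) <-> pi w pr (map rho xs ++ [rho c]).
Proof.
  simpl. split.
  - intros [rs [HF Hp]]. apply Forall2_app_l in HF. destruct HF as [r1 [r2 [-> [H1 H2]]]].
    apply Forall2_vts in H1. subst. inversion H2 as [|a b l l' Ha Hr]; subst. inversion Hr; subst.
    simpl in Ha; subst; auto.
  - intros Hp. exists (map rho xs ++ [rho c]). split; auto.
    apply Forall2_app; [apply Forall2_vts; auto|constructor; simpl; auto].
Qed.

Lemma map_upd_notin rho x r l : (forall z, In z l -> z <> x) -> map (upd P rho x r) l = map rho l.
Proof. intros Hl; apply map_ext_in; intros z Hz; apply upd_neq; auto. Qed.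

Lemma star_ok (R : rule T) b s th rho w :
  wf_belem R b -> agree P th rho (globals R) -> (forall v, In v (outer_vars b) -> In v (globals R)) ->
  (forall v, In v (belem_allvars P b) -> v < fst s) ->
  (hs pi2 w rho (fst (star P R b s)) <-> ht w (tau_belem P R th b)).
Proof.
  intros Hwf Hag Hout Hlt. destruct b as [l|o X L t]; cbn [star].
  - pose proof (tauB_lit_ok P H Tm l s th rho w) as K.
    destruct (tauB_lit P l s) as [F s1]. simpl fst in *. rewrite hs2_emb. apply K.
    + intros v Hv; apply Hag, Hout; auto.
    + intros v Hv; apply Hlt; auto.
  - destruct Hwf as [HnX [HXL [_ HXg]]].
    pose proof (val_ok P H Tm t (SG, fst s) (S (fst s), snd s) th) as Kt.
    pose proof (val_state P t (SG, fst s) (S (fst s), snd s)) as St.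
    destruct (val P t (SG, fst s) (S (fst s), snd s)) as [Ft s1]. simpl in St; simpl fst in Kt.
    set (V := vvars R L). set (W := wvars R X L).
    assert (HLlt0 : forall v, In v (Lvars L) -> v < fst s).
    { intros v Hv. apply Hlt; simpl; apply in_or_app; right; apply in_or_app; auto. }
    assert (HLlt : forall v, In v (Lvars L) -> v < fst s1).
    { intros v Hv. assert (v < fst s) by auto. lia. }
    assert (Ke : forall xs w', length xs = length X ->
       (Fsem w' X V (exs (gv W) (bigAnd (fst (tauB_list P L s1)))) xs (map rho (gv V)) <->
        ht w' (tau_elem P th X W L xs))).
    { intros xs w' Hl. apply elem_ok; auto.
      - apply NoDup_vvars.
      - apply NoDup_wvars.
      - intros v Hv HV. apply In_vvars in HV. apply (HXg v); tauto.
      - intros v Hv. apply In_wvars in Hv. tauto.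
      - intros v Hv HV. apply In_wvars in Hv. apply In_vvars in HV. tauto.
      - intros v Hv. destruct (classic (In v (globals R))).
        + right; right; apply In_vvars; auto.
        + destruct (classic (In v X)); auto. right; left; apply In_wvars; auto.
      - intros v Hv. apply In_vvars in Hv. apply Hag; tauto. }
    destruct (tauB_list P L s1) as [FL s2]. simpl fst in *.
    assert (Hkt : forall r, hs pi2 w (upd P rho (SG, fst s) r) (emb Ft) <-> tval P th t r).
    { intros r. rewrite hs2_emb, Kt; [rewrite upd_eq; tauto| |apply zok_SG; auto].
      intros v Hv. rewrite upd_neq; [apply Hag, Hout; simpl; auto|].
      intro E; inversion E; subst. assert (fst s < fst s) by (apply Hlt; simpl; apply in_or_app; right; apply in_or_app; auto). lia. }
    assert (HV : forall r, map (upd P rho (SG, fst s) r) (gv V) = map rho (gv V)).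
    { intros r. apply map_upd_notin. intros z Hz E. subst z. apply gv_in in Hz. apply In_vvars in Hz.
      assert (fst s < fst s) by (apply HLlt0; tauto). lia. }
    assert (LV : length (map rho (gv V)) = length V) by (rewrite length_map, gv_length; auto).
    rewrite hs_FExSG.
    destruct o; unfold tau_belem; simpl htsat; fold V W.
    + split.
      * intros [r Hr]. rewrite hs_and in Hr. destruct Hr as [Hr1 Hr2].
        apply Hkt in Hr1. rewrite hs_pred_args, HV, upd_eq in Hr2. simpl in Hr2.
        rewrite (firstn_exact _ _ _ (eq_sym LV)), last_last in Hr2.
        apply (atleast_equiv P H Tm) in Hr2. destruct Hr2 as [D [[Hnd HF] [Hc Hall]]].
        exists (exist _ r Hr1). simpl. exists (exist _ D (conj (conj Hnd HF) Hc)). simpl.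
        intros [x Hx]. simpl. rewrite Forall_forall in HF. apply Ke; auto.
      * intros [[r Hr1] [[D [[Hnd HF] Hc]] Hall]]. simpl in Hc, Hall.
        exists r. rewrite hs_and. split; [apply Hkt; auto|].
        rewrite hs_pred_args, HV, upd_eq. simpl.
        rewrite (firstn_exact _ _ _ (eq_sym LV)), last_last.
        apply (atleast_equiv P H Tm). exists D. split; [split; auto|]. split; auto.
        intros x Hx. rewrite Forall_forall in HF. apply Ke; auto. apply (Hall (exist _ x Hx)).
    + split.
      * intros [r Hr]. rewrite hs_and in Hr. destruct Hr as [Hr1 Hr2].
        apply Hkt in Hr1. rewrite hs_pred_args, HV, upd_eq in Hr2. simpl in Hr2.
        rewrite (firstn_exact _ _ _ (eq_sym LV)), last_last in Hr2.
        exists (exist _ r Hr1). simpl.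
        intros [D [[Hnd HF] Hc]] w' Ha Hall. simpl in Hc, Hall.
        specialize (Hr2 w' Ha). pose proof (proj1 (atmost_equiv P H Tm X V _ w' _ r) Hr2) as Hr3.
        apply (Hr3 D (conj Hnd HF) Hc). intros x Hx. rewrite Forall_forall in HF.
        apply Ke; auto. apply (Hall (exist _ x Hx)).
      * intros [[r Hr1] Hall]. simpl in Hall.
        exists r. rewrite hs_and. split; [apply Hkt; auto|].
        rewrite hs_pred_args, HV, upd_eq. simpl.
        rewrite (firstn_exact _ _ _ (eq_sym LV)), last_last.
        intros w' Ha. apply (proj2 (atmost_equiv P H Tm X V _ w' _ r)). intros D [Hnd HF] Hc Hx.
        apply (Hall (exist _ D (conj (conj Hnd HF) Hc)) w' Ha). simpl.
        intros [x Hin]. simpl. rewrite Forall_forall in HF. apply Ke; auto.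
Qed.

End Star.

Section Rules.
Variable P : PT.
Notation T := (pt P).
Notation hs := (hs P).
Variables (H Tm : patom P -> Prop).
Hypothesis HTsub : forall a, H a -> Tm a.
Notation pi0 := (pi0 P H Tm).
Notation pi2 := (pi2 P H Tm).
Notation ht := (htsat H Tm).
Notation updl := (updl P).

Lemma star_state (R : rule T) b s : fst s <= fst (snd (star P R b s)).
Proof.
  destruct b as [l|o X L t]; cbn [star].
  - pose proof (tauB_lit_state P l s) as S1. destruct (tauB_lit P l s); simpl in *; lia.
  - pose proof (val_state P t (SG, fst s) (S (fst s), snd s)) as S1.
    destruct (val P t (SG, fst s) (S (fst s), snd s)) as [Ft s1]. simpl in S1.
    pose proof (tauB_list_state P L s1) as S2. destruct (tauB_list P L s1) as [FL s2]. simpl in *; lia.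
Qed.

Lemma star_list_state (R : rule T) bs : forall s, fst s <= fst (snd (star_list P R bs s)).
Proof.
  induction bs as [|b bs IH]; intros s; simpl; auto.
  pose proof (star_state R b s) as S1. destruct (star P R b s) as [F s1]. simpl in S1.
  specialize (IH s1). destruct (star_list P R bs s1). simpl in *; lia.
Qed.

Lemma outer_sub (b : belem T) v : In v (outer_vars b) -> In v (belem_allvars P b).
Proof. destruct b; simpl; auto. intros; apply in_or_app; right; apply in_or_app; auto. Qed.

Lemma star_list_ok (R : rule T) bs : forall s th rho w,
  (forall b, In b bs -> wf_belem R b) -> agree P th rho (globals R) ->
  (forall b, In b bs -> forall v, In v (outer_vars b) -> In v (globals R)) ->
  (forall b, In b bs -> forall v, In v (belem_allvars P b) -> v < fst s) ->
  (hs pi2 w rho (bigAnd (fst (star_list P R bs s))) <-> forall b, In b bs -> ht w (tau_belem P R th b)).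
Proof.
  induction bs as [|b bs IH]; intros s th rho w Hwf Hag Hout Hlt.
  - simpl. split; auto. intros _ b [].
  - cbn [star_list].
    pose proof (star_ok P H Tm R b s th rho w) as K.
    pose proof (star_state R b s) as S1.
    destruct (star P R b s) as [F s1]. simpl fst in *.
    specialize (IH s1 th rho w).
    destruct (star_list P R bs s1) as [Fs s2]. simpl fst in *.
    rewrite hs_bigAnd, Forall_cons_iff, <- hs_bigAnd, IH, K.
    + split; [intros [A1 A2] b' [<-|Hb']; auto|intros Hq; split; [apply Hq|intros; apply Hq]; simpl; auto].
    + apply Hwf; simpl; auto.
    + auto.
    + apply Hout; simpl; auto.
    + apply Hlt; simpl; auto.
    + intros; apply Hwf; simpl; auto.
    + auto.
    + intros; eapply Hout; simpl; eauto.
    + intros b' Hb' v Hv. specialize (Hlt b' (or_intror Hb') v Hv). lia.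
Qed.

Lemma ht_body (R : rule T) th w :
  ht w (IAnd {b : belem T | In b (rbody R)} (fun b => tau_belem P R th (proj1_sig b))) <->
  forall b, In b (rbody R) -> ht w (tau_belem P R th b).
Proof.
  simpl. split.
  - intros Hq b Hb. apply (Hq (exist _ b Hb)).
  - intros Hq [b Hb]; simpl; auto.
Qed.

Lemma hs_alls_wsr {Pr} (pi : bool -> Pr -> list T -> Prop) w xs (A : form T Pr) : forall rho, wsr P rho ->
  (hs pi w rho (alls xs A) <-> forall rho', wsr P rho' -> (forall y, ~ In y xs -> rho' y = rho y) -> hs pi w rho' A).
Proof.
  induction xs as [|x xs IH]; intros rho Hr; simpl.
  - split.
    + intros HA rho' _ Hag. apply (hs_ext P pi A w rho rho'); auto. intros y _; rewrite Hag; auto.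
    + intros Hq; apply Hq; auto.
  - change (hs pi w rho (FAll x (alls xs A)) <-> forall rho', wsr P rho' -> (forall y, ~ (x = y \/ In y xs) -> rho' y = rho y) -> hs pi w rho' A).
    rewrite hs_all. split.
    + intros Hq rho' Hw Hag. assert (Hd : dom P x (rho' x)).
      { intros Hs. destruct x as [[|] n]; simpl in Hs; try discriminate. apply Hw. }
      specialize (Hq (rho' x) Hd). rewrite IH in Hq; [|apply wsr_upd_dom; auto].
      apply Hq; auto. intros y Hy. unfold upd. destruct (var_eqb y x) eqn:E.
      * apply var_eqb_true in E; subst; auto.
      * apply Hag. intros [E'|E']; [subst; rewrite var_eqb_refl in E; discriminate|tauto].
    + intros Hq r Hd. rewrite IH; [|apply wsr_upd_dom; auto].
      intros rho' Hw Hag. apply Hq; auto. intros y Hy. rewrite Hag; [|tauto]. apply upd_neq. intro; subst; tauto.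
Qed.

Lemma hs_closure {Pr} (pi : bool -> Pr -> list T -> Prop) w (A : form T Pr) rho : wsr P rho ->
  (hs pi w rho (closure A) <-> forall rho', wsr P rho' -> hs pi w rho' A).
Proof.
  intros Hr. unfold closure. rewrite hs_alls_wsr; auto. split.
  - intros Hq rho'' Hw.
    set (rho' := fun y => if in_dec var_eq_dec y (nodup var_eq_dec (fv A)) then rho'' y else rho y).
    apply (hs_ext P pi A w rho'' rho').
    + intros y Hy. unfold rho'. destruct (in_dec _ _ _) as [|n]; auto. exfalso; apply n, nodup_In; auto.
    + apply Hq.
      * intros k. unfold rho'. destruct (in_dec _ _ _); auto.
      * intros y Hy. unfold rho'. destruct (in_dec _ _ _); tauto.
  - intros Hq rho' Hw _. apply Hq; auto.
Qed.

Lemma ext_map vs f th v : In v vs -> ext P vs (map f vs) th v = f v.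
Proof.
  induction vs as [|a vs IH]; simpl; [tauto|]. intros Hv.
  destruct (Nat.eqb_spec v a); [subst; auto|]. apply IH. destruct Hv; [congruence|auto].
Qed.

Definition rho_of (th : nat -> T) : var -> T :=
  fun y => match y with (SG, v) => th v | (SI, _) => num P 0 end.

Lemma rho_of_wsr th : wsr P (rho_of th).
Proof. intros n; exists 0%Z; auto. Qed.

Definition rule_vars (R : rule T) := head_vars (rhead R) ++ flat_map (belem_allvars P) (rbody R).

Lemma globals_in (R : rule T) v : In v (globals R) <->
  In v (head_vars (rhead R)) \/ exists b, In b (rbody R) /\ In v (outer_vars b).
Proof.
  unfold globals. rewrite nodup_In, in_app_iff, in_flat_map. tauto.
Qed.

Lemma globals_sub (R : rule T) v : In v (globals R) -> In v (rule_vars R).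
Proof.
  rewrite globals_in. unfold rule_vars. rewrite in_app_iff, in_flat_map.
  intros [Hv|[b [Hb Hv]]]; [left; auto|right; exists b; split; auto; apply outer_sub; auto].
Qed.

Lemma hs_patom w rho p n zs :
  hs pi2 w rho (FPred (P0 (PSym p n)) (vts zs)) <-> (if w then H else Tm) (p, map rho zs).
Proof.
  simpl. split.
  - intros [rs [HF Hp]]. apply Forall2_vts in HF; subst; auto.
  - intros Hp. exists (map rho zs); split; auto. apply Forall2_vts; auto.
Qed.

Lemma rule_ok (R : rule T) s w rho : wf_rule R -> (forall v, In v (rule_vars R) -> v < fst s) -> wsr P rho ->
  (hs pi2 w rho (fst (tau_star_rule P R s)) <-> ht w (tau_rule P R)).
Proof.
  intros Hwf Hlt Hr. unfold tau_star_rule, tau_rule.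
  assert (Kb : forall th rho w, agree P th rho (globals R) ->
    (hs pi2 w rho (bigAnd (fst (star_list P R (rbody R) s))) <->
     forall b, In b (rbody R) -> ht w (tau_belem P R th b))).
  { intros th rho' w' Hag. apply star_list_ok; auto.
    - intros b Hb v Hv. apply globals_in. right; eauto.
    - intros b Hb v Hv. apply Hlt. unfold rule_vars. apply in_or_app; right. apply in_flat_map; eauto. }
  pose proof (star_list_state R (rbody R) s) as Sb.
  assert (HG : forall v, In v (globals R) -> v < fst s) by (intros; apply Hlt, globals_sub; auto).
  assert (HH : forall v, In v (head_vars (rhead R)) -> In v (globals R)) by (intros; apply globals_in; auto).
  destruct (star_list P R (rbody R) s) as [Bs s1]. simpl fst in Kb, Sb.
  destruct (rhead R) as [p ts|p ts|] eqn:Eh.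
  - rewrite fresh_gens_eq.
    set (zs := gv (seq (fst s1) (length ts))).
    pose proof (val_list_ok P H Tm ts zs (fst s1 + length ts, snd s1)) as Kv.
    destruct (val_list P ts zs _) as [Fs s3]. simpl fst in *.
    assert (Hzs : forall z, In z zs -> fst z = SG) by (intros z Hz; apply gv_sort in Hz; auto).
    assert (NDz : NoDup zs) by (apply gv_NoDup, seq_NoDup).
    assert (Lz : length zs = length ts) by (unfold zs; rewrite gv_length, length_seq; auto).
    assert (F1 : forall th rho' w', agree P th rho' (globals R) ->
      (hs pi2 w' rho' (bigAnd (Bs ++ [emb (bigAnd Fs)])) <->
       (forall b, In b (rbody R) -> ht w' (tau_belem P R th b)) /\ Forall2 (tval P th) ts (map rho' zs))).
    { intros th rho' w' Hag. rewrite hs_bigAnd, Forall_app, <- hs_bigAnd, (Kb th); [|exact Hag].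
      rewrite Forall_cons_iff, hs2_emb, (Kv th).
      all: try (symmetry; exact Lz); try exact Hzs; try (intros v Hv; apply Hag, HH; auto).
      split; [intros [A1 [A2 _]]; auto|intros [A1 A2]; repeat split; auto]. }
    rewrite hs_closure; auto. simpl htsat. split.
    + intros Hall [xs Hxs] w' Ha HB [rs Hrs]. simpl in HB, Hrs |- *.
      set (th := ext P (globals R) xs (fun _ => num P 0)) in *.
      set (rho' := updl (rho_of th) zs rs).
      assert (Ag : agree P th rho' (globals R)).
      { intros v Hv. unfold rho'. rewrite updl_notin; auto. unfold zs. rewrite gv_in, in_seq.
        specialize (HG v Hv). lia. }
      assert (Mz : map rho' zs = rs).
      { unfold rho'. apply map_updl; auto. rewrite Lz. eapply Forall2_length; eauto. }
      specialize (Hall rho' (wsr_updl P _ _ _ (rho_of_wsr th) Hzs) w' Ha).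
      rewrite hs_patom, Mz in Hall. apply Hall. apply (proj2 (F1 th rho' w' Ag)). split.
      * intros b Hb. apply (HB (exist _ b Hb)).
      * rewrite Mz; auto.
    + intros Hall rho' Hw w' Ha HBF. rewrite hs_patom.
      set (xs := map (fun v => rho' (SG, v)) (globals R)).
      set (th := ext P (globals R) xs (fun _ => num P 0)).
      assert (Ag : agree P th rho' (globals R)) by (intros v Hv; unfold th, xs; rewrite ext_map; auto).
      apply (proj1 (F1 th rho' w' Ag)) in HBF. destruct HBF as [HB HF].
      apply (Hall (exist _ xs (length_map _ _)) w' Ha (fun b => HB (proj1_sig b) (proj2_sig b))
                  (exist _ (map rho' zs) HF)).
  - rewrite fresh_gens_eq.
    set (zs := gv (seq (fst s1) (length ts))).
    pose proof (val_list_ok P H Tm ts zs (fst s1 + length ts, snd s1)) as Kv.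
    destruct (val_list P ts zs _) as [Fs s3]. simpl fst in *.
    assert (Hzs : forall z, In z zs -> fst z = SG) by (intros z Hz; apply gv_sort in Hz; auto).
    assert (NDz : NoDup zs) by (apply gv_NoDup, seq_NoDup).
    assert (Lz : length zs = length ts) by (unfold zs; rewrite gv_length, length_seq; auto).
    assert (F1 : forall th rho' w', agree P th rho' (globals R) ->
      (hs pi2 w' rho' (bigAnd (Bs ++ [emb (bigAnd Fs)])) <->
       (forall b, In b (rbody R) -> ht w' (tau_belem P R th b)) /\ Forall2 (tval P th) ts (map rho' zs))).
    { intros th rho' w' Hag. rewrite hs_bigAnd, Forall_app, <- hs_bigAnd, (Kb th); [|exact Hag].
      rewrite Forall_cons_iff, hs2_emb, (Kv th).
      all: try (symmetry; exact Lz); try exact Hzs; try (intros v Hv; apply Hag, HH; auto).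
      split; [intros [A1 [A2 _]]; auto|intros [A1 A2]; repeat split; auto]. }
    assert (F2 : forall rho' w', hs pi2 w' rho' (FOr (FPred (P0 (PSym p (length ts))) (vts zs))
                       (FNot (FPred (P0 (PSym p (length ts))) (vts zs)))) <->
                 ht w' (iOr2 (IAtom (p, map rho' zs)) (iNeg (IAtom (p, map rho' zs))))).
    { intros rho' w'. unfold FNot, iOr2, iNeg. rewrite hs_or. simpl htsat.
      assert (E : forall w'', hs pi2 w'' rho' (FPred (P0 (PSym p (length ts))) (vts zs)) <->
                               (if w'' then H else Tm) (p, map rho' zs)) by (intros; apply hs_patom).
      split.
      - intros [Ha|Hn]; [exists true; apply E; auto|exists false].
        simpl in Hn |- *. intros w'' Ha' Hx. apply (Hn w'' Ha'). apply E; auto.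
      - intros [[|] Hb]; [left; apply E; auto|right].
        simpl in Hb |- *. intros w'' Ha' Hx. apply (Hb w'' Ha'). apply E; auto. }
    rewrite hs_closure; auto. simpl htsat. split.
    + intros Hall [xs Hxs] w' Ha HB [rs Hrs]. simpl in HB, Hrs |- *.
      set (th := ext P (globals R) xs (fun _ => num P 0)) in *.
      set (rho' := updl (rho_of th) zs rs).
      assert (Ag : agree P th rho' (globals R)).
      { intros v Hv. unfold rho'. rewrite updl_notin; auto. unfold zs. rewrite gv_in, in_seq.
        specialize (HG v Hv). lia. }
      assert (Mz : map rho' zs = rs).
      { unfold rho'. apply map_updl; auto. rewrite Lz. eapply Forall2_length; eauto. }
      specialize (Hall rho' (wsr_updl P _ _ _ (rho_of_wsr th) Hzs) w' Ha).
      rewrite F2, Mz in Hall. apply Hall. apply (proj2 (F1 th rho' w' Ag)). split.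
      * intros b Hb. apply (HB (exist _ b Hb)).
      * rewrite Mz; auto.
    + intros Hall rho' Hw w' Ha HBF. rewrite F2.
      set (xs := map (fun v => rho' (SG, v)) (globals R)).
      set (th := ext P (globals R) xs (fun _ => num P 0)).
      assert (Ag : agree P th rho' (globals R)) by (intros v Hv; unfold th, xs; rewrite ext_map; auto).
      apply (proj1 (F1 th rho' w' Ag)) in HBF. destruct HBF as [HB HF].
      apply (Hall (exist _ xs (length_map _ _)) w' Ha (fun b => HB (proj1_sig b) (proj2_sig b))
                  (exist _ (map rho' zs) HF)).
  - simpl fst. rewrite hs_closure; auto. simpl htsat. split.
    + intros Hall [xs Hxs] w' Ha HB. simpl in HB.
      set (th := ext P (globals R) xs (fun _ => num P 0)) in *.
      assert (Ag : agree P th (rho_of th) (globals R)) by (intros v Hv; auto).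
      apply (Hall (rho_of th) (rho_of_wsr th) w' Ha). apply (Kb th); auto.
      intros b Hb. apply (HB (exist _ b Hb)).
    + intros Hall rho' Hw w' Ha HB.
      set (xs := map (fun v => rho' (SG, v)) (globals R)).
      set (th := ext P (globals R) xs (fun _ => num P 0)).
      assert (Ag : agree P th rho' (globals R)) by (intros v Hv; unfold th, xs; rewrite ext_map; auto).
      pose proof (proj1 (Kb th rho' w' Ag) HB) as HB'.
      apply (Hall (exist _ xs (length_map _ _)) w' Ha (fun b => HB' (proj1_sig b) (proj2_sig b))).
Qed.

End Rules.

Section Prog.
Variable P : PT.
Notation T := (pt P).
Notation hs := (hs P).
Variables (H Tm : patom P -> Prop).
Notation pi2 := (pi2 P H Tm).
Notation ht := (htsat H Tm).

Lemma tau_star_rule_state (R : rule T) s : fst s <= fst (snd (tau_star_rule P R s)).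
Proof.
  unfold tau_star_rule.
  pose proof (star_list_state P R (rbody R) s) as S1.
  destruct (star_list P R (rbody R) s) as [Bs s1]. simpl in S1.
  destruct (rhead R) as [p ts|p ts|]; try (simpl; lia); rewrite fresh_gens_eq;
    pose proof (val_list_state P ts (gv (seq (fst s1) (length ts))) (fst s1 + length ts, snd s1)) as S2;
    destruct (val_list P ts _ _) as [Fs s3]; simpl in *; lia.
Qed.

Lemma rules_ok Pi : forall s w rho, wf_program Pi -> (forall v, In v (prog_vars P Pi) -> v < fst s) -> wsr P rho ->
  (hs pi2 w rho (bigAnd (tau_star_rules P Pi s)) <-> forall R, In R Pi -> ht w (tau_rule P R)).
Proof.
  induction Pi as [|R Pi IH]; intros s w rho Hwf Hlt Hr.
  - simpl. split; auto. intros _ R [].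
  - cbn [tau_star_rules].
    pose proof (rule_ok P H Tm R s w rho) as K.
    pose proof (tau_star_rule_state R s) as S1.
    destruct (tau_star_rule P R s) as [F s1]. simpl fst in *.
    rewrite hs_bigAnd, Forall_cons_iff, <- hs_bigAnd, IH, K; auto.
    + split; [intros [A1 A2] R' [<-|HR']; auto|intros Hq; split; [apply Hq|intros; apply Hq]; simpl; auto].
    + apply Hwf; simpl; auto.
    + intros v Hv; apply Hlt. unfold prog_vars; simpl. apply in_or_app; left; auto.
    + intros R' HR'; apply Hwf; simpl; auto.
    + intros v Hv. assert (v < fst s); [|lia]. apply Hlt. unfold prog_vars in *; simpl. apply in_or_app; right; auto.
Qed.

Lemma prog_ok Pi w rho : wf_program Pi -> wsr P rho ->
  (hs pi2 w rho (tau_star P Pi) <-> ht w (tau_prog P Pi)).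
Proof.
  intros Hwf Hr. unfold tau_star. rewrite rules_ok; auto.
  - unfold tau_prog. simpl. split.
    + intros Hq [R HR]; simpl; auto.
    + intros Hq R HR; apply (Hq (exist _ R HR)).
  - intros v Hv. simpl. assert (v <= list_max (prog_vars P Pi)); [|lia].
    pose proof (list_max_le (prog_vars P Pi) (list_max (prog_vars P Pi))) as [L _].
    specialize (L (le_n _)). rewrite Forall_forall in L. auto.
Qed.

End Prog.

Theorem theorem1 (P : PT) (Pi1 Pi2 : program (pt P)) :
  wf_program Pi1 -> wf_program Pi2 ->
  HT_provable P (FIff (tau_star P Pi1) (tau_star P Pi2)) ->
  strongly_equivalent P Pi1 Pi2.
Proof.
  intros Hw1 Hw2 Hprov. unfold strongly_equivalent. intros Phi M.
  apply se_of_ht. intros Hh Tm HTsub w.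
  assert (Hr : wsr P (rho0 P)) by (intros n; exists 0%Z; auto).
  pose proof (soundness P Hh Tm HTsub _ Hprov w (rho0 P) Hr) as S.
  rewrite hs_iff in S. specialize (S w (acc_refl w)).
  rewrite <- (prog_ok P Hh Tm Pi1 w (rho0 P)), <- (prog_ok P Hh Tm Pi2 w (rho0 P)); auto.
Qed.
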